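(* Fix $a\in(0,1/2]$ and $\beta\in(\frac12,1)$. For each $n$ let $k=2\lfloor \beta n/2\rfloor$ and let $\mathbf{x}^*\in\mathbb{R}^n$ be the vector whose only possibly nonzero entries are the $k$-th and $(k+1)$-th, \[ x_k^*=\frac{1+2\left(\frac kn+\frac1n\right)^{2}-2\left(\frac kn+\frac1n\right)-\frac1n}{\binom nk\,2\frac kn\left(2\frac kn-1+\frac1n\left(2\frac kn+\frac2n-1\right)\right)},\qquad x_{k+1}^*=\frac{1-\frac kn}{\binom n{k+1}\left(2\frac kn-1+\frac1n\left(2\frac kn+\frac2n-1\right)\right)}. \] Then for all sufficiently large $n$, $\mathbf{x}^*$ is a feasible point of the linear program defining $\overline{\Lambda}(n;a)$, and the value of its objective at $\mathbf{x}^*$ converges, as $n\to\infty$, to \[ -\left[1+(1-2\beta)\left(\tfrac1a-1\right)\right]\frac{1}{2\beta(2\beta-1)}. \] Consequently $\liminf_{n\to\infty}\overline{\Lambda}(n;a)\ge \sup_{\beta\in(1/2,1)}\left(-\left[1+(1-2\beta)(\frac1a-1)\right]\frac{1}{2\beta(2\beta-1)}\right)=\theta(a)$, where $\theta(a)=\frac{(1-\sqrt a)^2}{a}$ for $0<a<\frac14$ (the supremum being attained at $\beta=\frac{1}{2(1-\sqrt a)}$) and $\theta(a)=\frac{1}{2a}-1$ for $\frac14\le a\le\frac12$.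
   Context: For integers $n\ge1$, $k\in[0:n]$ and real $x$, the Krawtchouk polynomial is $K_k(x)=K_k^{(n)}(x):=\sum_{j=0}^{k}(-1)^{j}\binom{x}{j}\binom{n-x}{k-j}$, with generalized binomial coefficients $\binom{x}{j}=\frac{x(x-1)\cdots(x-j+1)}{j!}$. Here $[m:n]=\{m,m+1,\dots,n\}$. For real $a\in(0,1/2]$, $\overline{\Lambda}(n;a)$ is the optimal value of the linear program: maximize $-\sum_{k=1}^{n}\left[K_k(0)+K_k(1)\left(\frac1a-1\right)\right]x_k$ over $(x_1,\dots,x_n)\in\mathbb{R}^n$ subject to $x_k\ge0$ for $k\in[1:n]$ and $\sum_{k=1}^{n}[K_k(1)-K_k(i)]x_k\ge -1$ for all $i\in[2:n]$. *)

(* Defs.v *)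
From Stdlib Require Import Reals Lra Lia ZArith.
Open Scope R_scope.

Fixpoint falling (x : R) (j : nat) : R :=
  match j with
  | O => 1
  | S m => falling x m * (x - INR m)
  end.

Definition gbinom (x : R) (j : nat) : R := falling x j / INR (fact j).

Definition Kraw (n k : nat) (x : R) : R :=
  sum_f_R0 (fun j => (-1) ^ j * gbinom x j * gbinom (INR n - x) (k - j)) k.

Fixpoint sum1 (n : nat) (f : nat -> R) : R :=
  match n with
  | O => 0
  | S m => sum1 m f + f (S m)
  end.

(* A point of R^n is represented by x : nat -> R, using entries x 1, ..., x n. *)
Definition LP_feasible (n : nat) (x : nat -> R) : Prop :=
  (forall k : nat, (1 <= k <= n)%nat -> 0 <= x k) /\
  (forall i : nat, (2 <= i <= n)%nat ->
     sum1 n (fun k => (Kraw n k 1 - Kraw n k (INR i)) * x k) >= -1).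

Definition LP_objective (n : nat) (a : R) (x : nat -> R) : R :=
  - sum1 n (fun k => (Kraw n k 0 + Kraw n k 1 * (1 / a - 1)) * x k).

(* set of objective values attained at feasible points; Lambda_bar(n;a) is its sup *)
Definition LP_values (n : nat) (a : R) (v : R) : Prop :=
  exists x : nat -> R, LP_feasible n x /\ v = LP_objective n a x.

Definition kk (beta : R) (n : nat) : nat :=
  (2 * Z.to_nat (Int_part (beta * INR n / 2)))%nat.

Definition xstar (beta : R) (n : nat) (j : nat) : R :=
  let k := kk beta n in
  let t := INR k / INR n in
  let e := 1 / INR n in
  let D := 2 * t - 1 + e * (2 * t + 2 * e - 1) in
  if Nat.eqb j k then
    (1 + 2 * (t + e) ^ 2 - 2 * (t + e) - e) / (C n k * (2 * t) * D)
  else if Nat.eqb j (S k) then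
    (1 - t) / (C n (S k) * D)
  else 0.

Definition limit_value (a beta : R) : R :=
  - (1 + (1 - 2 * beta) * (1 / a - 1)) * (1 / (2 * beta * (2 * beta - 1))).

Definition theta (a : R) : R :=
  if Rlt_dec a (1/4) then (1 - sqrt a) ^ 2 / a else 1 / (2 * a) - 1.

(* Main.v *)
Require Import Defs.
From Stdlib Require Import Reals Lra Lia Arith Factorial.
Open Scope R_scope.

Lemma falling_S x m : falling x (S m) = x * falling (x - 1) m.
Proof.
  induction m as [|m IH].
  - simpl. ring.
  - change (falling x (S (S m))) with (falling x (S m) * (x - INR (S m))).
    rewrite IH. change (falling (x-1) (S m)) with (falling (x-1) m * (x - 1 - INR m)).
    rewrite S_INR. ring.
Qed.

Lemma gb0 x : gbinom x 0 = 1.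
Proof. unfold gbinom; simpl. field. Qed.

Lemma gb_pascal x j : gbinom (x+1) (S j) = gbinom x (S j) + gbinom x j.
Proof.
  unfold gbinom. rewrite falling_S. replace (x + 1 - 1) with x by ring.
  change (falling x (S j)) with (falling x j * (x - INR j)).
  change (fact (S j)) with (S j * fact j)%nat. rewrite mult_INR, S_INR.
  assert (H1 := INR_fact_neq_0 j). assert (H2 := pos_INR j).
  field. split; [exact H1| lra].
Qed.

Lemma gb_zero0 j : gbinom 0 (S j) = 0.
Proof. unfold gbinom. rewrite falling_S. unfold Rdiv. ring. Qed.

Lemma falling_nat n k : (k <= n)%nat ->
  falling (INR n) k = INR (fact n) / INR (fact (n - k)).
Proof.
  induction k as [|k IH]; intros Hk.
  - simpl. rewrite Nat.sub_0_r. field. apply INR_fact_neq_0.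
  - change (falling (INR n) (S k)) with (falling (INR n) k * (INR n - INR k)).
    rewrite IH by lia.
    replace (n - k)%nat with (S (n - S k)) by lia.
    change (fact (S (n - S k))) with (S (n - S k) * fact (n - S k))%nat.
    rewrite mult_INR. rewrite S_INR. rewrite minus_INR by lia. rewrite S_INR.
    assert (H1 := INR_fact_neq_0 (n - S k)).
    assert (H2 : INR (S k) <= INR n) by (apply le_INR; lia). rewrite S_INR in H2.
    field. split; [exact H1|]. lra.
Qed.

Lemma gb_nat n k : (k <= n)%nat -> gbinom (INR n) k = C n k.
Proof.
  intros Hk. unfold gbinom, C. rewrite falling_nat by exact Hk.
  field. split; apply INR_fact_neq_0.
Qed.

Module MC.
From mathcomp Require Import all_boot all_algebra Rstruct ring zify.
Import GRing.Theory.
Local Open Scope ring_scope.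

Lemma coef_b (m j : nat) : ((1 + 'X : {poly R})^+m)`_j = gbinom (INR m) j.
Proof.
  elim: m j => [|m IH] j.
  - rewrite expr0 coefE. case: j => [|j] /=.
    + by rewrite gb0.
    + by rewrite gb_zero0.
  - rewrite exprSr mulrDr mulr1 coefD coefMX S_INR.
    case: j => [|j] /=; rewrite !IH.
    + by rewrite !gb0 addr0.
    + rewrite gb_pascal. by rewrite RplusE.
Qed.

Lemma coef_a (m j : nat) : ((1 - 'X : {poly R})^+m)`_j = (-1)^+j * gbinom (INR m) j.
Proof.
  elim: m j => [|m IH] j.
  - rewrite expr0 coefE. case: j => [|j] /=.
    + by rewrite gb0 mulr1.
    + by rewrite gb_zero0 mulr0.
  - rewrite exprSr mulrBr mulr1 coefB coefMX S_INR.
    case: j => [|j] /=; rewrite !IH.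
    + by rewrite !gb0 subr0.
    + rewrite gb_pascal. rewrite RplusE exprS. ring.
Qed.

Lemma sum_big (f : nat -> R) k : sum_f_R0 f k = \sum_(j < k.+1) f j.
Proof.
  elim: k => [|k IH].
  - by rewrite big_ord1.
  - rewrite big_ord_recr /= -IH. by [].
Qed.

Definition Pk (n i : nat) : {poly R} := (1 - 'X)^+i * (1 + 'X)^+(n - i).
Definition KP (n k i : nat) : R := (Pk n i)`_k.

Lemma Kraw_KP n k i : (i <= n)%N -> Kraw n k (INR i) = KP n k i.
Proof.
  move=> Hi. rewrite /Kraw /KP /Pk sum_big coefM.
  apply: eq_bigr => j _. rewrite coef_a coef_b -minus_INR; last by apply/leP.
  by rewrite RpowE.
Qed.


Lemma rec_poly n i : (i <= n)%N ->
  (n - i)%:R *: Pk n i.+1 - n%:R *: Pk n i + i%:R *: Pk n i.-1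
   + 2%:R *: ('X * (Pk n i)^`()) = 0.
Proof.
  move=> Hi. rewrite /Pk.
  case: i Hi => [|i] Hi.
  - rewrite subn0 /= expr0 mul1r scale0r addr0 expr1 subn1.
    case: n Hi => [|n] Hi.
    + by rewrite /= !expr0 !scale0r subrr add0r derivC mulr0 scaler0.
    + rewrite deriv_exp derivD derivC derivX add0r mul1r -pred_Sn exprS.
      rewrite !scaler_nat. ring.
  - have [Hn|Hn] := leqP n i.+1.
    + have -> : n = i.+1 by apply/eqP; rewrite eqn_leq Hi Hn.
      rewrite subnn /= subSnn expr0 mulr1 expr1 scale0r add0r.
      rewrite deriv_exp derivB derivC derivX sub0r.
      rewrite !scaler_nat !exprS. ring.
    + have [l El] : exists l, n = (l + i.+2)%N by exists (n - i.+2)%N; lia.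
      subst n.
      have E1 : (l + i.+2 - i.+1 = l.+1)%N by lia.
      have E2 : (l + i.+2 - i.+2 = l)%N by lia.
      have E3 : (l + i.+2 - i = l.+2)%N by lia.
      rewrite -pred_Sn E1 E2 E3.
      rewrite derivM !deriv_exp derivB derivD derivC derivX sub0r add0r.
      rewrite !scaler_nat !exprS. ring.
Qed.

Lemma KP_rec0 n k i : (i <= n)%N ->
  (n - i)%:R * KP n k i.+1 - n%:R * KP n k i + i%:R * KP n k i.-1
   + 2%:R * k%:R * KP n k i = 0.
Proof.
  move=> Hi. move: (rec_poly n i Hi) => /(congr1 (fun p : {poly R} => p`_k)).
  rewrite /KP !coefD coefN !coefZ coefXM coef0.
  case: k => [|k] /=.
  - by rewrite mulr0 mul0r.
  - rewrite coef_deriv -mulr_natl => H. rewrite -[RHS]H. ring.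
Qed.

Lemma KP_0 n k : le k n -> KP n k 0 = C n k.
Proof. move=> /leP Hk. by rewrite /KP /Pk expr0 mul1r subn0 coef_b gb_nat //; apply/leP. Qed.

Lemma KP_rec1 n k i : le i n ->
  (n - i)%:R * KP n k i.+1 - n%:R * KP n k i + i%:R * KP n k i.-1
   + 2%:R * k%:R * KP n k i = 0.
Proof. by move=> /leP; apply: KP_rec0. Qed.

Lemma Kraw_KP1 n k i : le i n -> Kraw n k (INR i) = KP n k i.
Proof. by move=> /leP; apply: Kraw_KP. Qed.

Lemma KP_n n k : le k n -> KP n k n = (-1)^+k * C n k.
Proof. move=> /leP Hk. by rewrite /KP /Pk subnn expr0 mulr1 coef_a gb_nat //; apply/leP. Qed.

End MC.

Lemma KP_rec n k i : (i <= n)%nat ->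
  (INR n - INR i) * MC.KP n k (S i) - INR n * MC.KP n k i + INR i * MC.KP n k (i - 1)
   + 2 * INR k * MC.KP n k i = 0.
Proof.
  intros Hi. assert (H := MC.KP_rec1 n k i Hi).
  rewrite <- minus_INR by exact Hi.
  replace (i - 1)%nat with (Nat.pred i) by lia.
  rewrite !Rstruct.INRE. exact H.
Qed.


Lemma KP_0 n k : (k <= n)%nat -> MC.KP n k 0 = C n k.
Proof. exact (MC.KP_0 n k). Qed.
Lemma KP_n n k : (k <= n)%nat -> MC.KP n k n = (-1)^k * C n k.
Proof. intros H. rewrite (MC.KP_n n k H). rewrite Rstruct.RpowE. reflexivity. Qed.
Lemma Kraw_KP n k i : (i <= n)%nat -> Kraw n k (INR i) = MC.KP n k i.
Proof. exact (MC.Kraw_KP1 n k i). Qed.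

From Stdlib Require Import Reals Lra Lia Arith.
Open Scope R_scope.

Lemma rec_unique (n : nat) (m : R) (f g : nat -> R) :
  f 0%nat = g 0%nat -> f 1%nat = g 1%nat ->
  (forall i, (1 <= i)%nat -> (i < n)%nat ->
     (INR n - INR i) * f (S i) = m * f i - INR i * f (i - 1)%nat) ->
  (forall i, (1 <= i)%nat -> (i < n)%nat ->
     (INR n - INR i) * g (S i) = m * g i - INR i * g (i - 1)%nat) ->
  forall i, (i <= n)%nat -> f i = g i.
Proof.
  intros H0 H1 Hf Hg.
  assert (P : forall i, (S i <= n)%nat -> f i = g i /\ f (S i) = g (S i)).
  { induction i as [|i IH]; intros Hi.
    - split; assumption.
    - destruct IH as [IH1 IH2]; [lia|]. split; [exact IH2|].
      assert (Hlt : INR (S i) < INR n) by (apply lt_INR; lia).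
      assert (E1 := Hf (S i) ltac:(lia) ltac:(lia)).
      assert (E2 := Hg (S i) ltac:(lia) ltac:(lia)).
      replace (S i - 1)%nat with i in E1, E2 by lia.
      rewrite IH1, IH2 in E1. rewrite <- E2 in E1.
      apply Rmult_eq_reg_l in E1; [exact E1| lra]. }
  intros i Hi. destruct i as [|i]; [exact H0|]. apply (P i Hi).
Qed.

Lemma sigma_region (n : nat) (r s : R) (v : nat -> R) (I : nat) :
  0 < s -> s <= r -> r < 1 -> v 0%nat = 1 -> v 1%nat = r ->
  (forall i, (1 <= i)%nat -> (i < n)%nat ->
     (INR n - INR i) * v (S i) = r * INR n * v i - INR i * v (i - 1)%nat) ->
  (I < n)%nat -> INR I * (1 - s * s) <= INR n * (r * s - s * s) ->
  forall i, (1 <= i <= S I)%nat ->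
    0 < v i /\ v i <= r * v (i - 1)%nat /\ s * v (i - 1)%nat <= v i.
Proof.
  intros Hs Hsr Hr1 H0 H1 Hrec HI Hcond.
  induction i as [|i IH]; intros Hi; [lia|].
  destruct i as [|j].
  - simpl. rewrite H0, H1. lra.
  - destruct IH as [Hb [Hbu Hbl]]; [lia|].
    replace (S j - 1)%nat with j in Hbu, Hbl by lia.
    replace (S (S j) - 1)%nat with (S j) by lia.
    set (a := v j) in *. set (b := v (S j)) in *. set (c := v (S (S j))).
    assert (E := Hrec (S j) ltac:(lia) ltac:(lia)).
    replace (S j - 1)%nat with j in E by lia. fold a b c in E.
    set (N := INR n) in *. set (X := INR (S j)) in *.
    assert (HX : 0 < X) by (unfold X; apply lt_0_INR; lia).
    assert (HXN : X < N) by (unfold X, N; apply lt_INR; lia).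
    assert (HXI : X <= INR I) by (unfold X; apply le_INR; lia).
    assert (Hr0 : 0 < r) by lra.
    assert (Ha : 0 < a).
    { destruct (Rle_lt_dec a 0) as [Hn|Hn]; [|exact Hn].
      assert (r * a <= r * 0) by (apply Rmult_le_compat_l; lra). lra. }
    assert (Hab : b <= a).
    { assert (r * a <= 1 * a) by (apply Rmult_le_compat_r; lra). lra. }
    assert (Hup : c <= r * b).
    { apply Rmult_le_reg_l with (N - X); [lra|].
      rewrite E.
      assert (r * b <= 1 * b) by (apply Rmult_le_compat_r; lra).
      assert (X * (r * b) <= X * a) by (apply Rmult_le_compat_l; lra).
      lra. }
    assert (Hlo : s * b <= c).
    { apply Rmult_le_reg_l with (N - X); [lra|].
      rewrite E.
      assert (H2 : X * (1 - s * s) <= N * (r * s - s * s)).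
      { apply Rle_trans with (INR I * (1 - s * s)); [|exact Hcond].
        apply Rmult_le_compat_r; nra. }
      (* (N-X) s b <= r N b - X a ; use s a <= b *)
      assert (H3 : X * (s * a) <= X * b) by (apply Rmult_le_compat_l; lra).
      assert (H4 : b * (X * (1 - s * s)) <= b * (N * (r * s - s * s)))
        by (apply Rmult_le_compat_l; lra).
      apply Rmult_le_reg_l with s; [lra|].
      assert (H5 : s * (X * a) <= X * b) by lra.
      nra. }
    split; [nra|split; assumption].
Qed.

Lemma sigma_pow (n : nat) (r s : R) (v : nat -> R) (I : nat) :
  0 < s -> s <= r -> r < 1 -> v 0%nat = 1 -> v 1%nat = r ->
  (forall i, (1 <= i)%nat -> (i < n)%nat ->
     (INR n - INR i) * v (S i) = r * INR n * v i - INR i * v (i - 1)%nat) ->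
  (I < n)%nat -> INR I * (1 - s * s) <= INR n * (r * s - s * s) ->
  forall i, (i <= S I)%nat -> 0 < v i /\ v i <= r ^ i.
Proof.
  intros Hs Hsr Hr1 H0 H1 Hrec HI Hcond.
  induction i as [|i IH]; intros Hi.
  - rewrite H0. simpl. lra.
  - destruct (sigma_region n r s v I Hs Hsr Hr1 H0 H1 Hrec HI Hcond (S i) ltac:(lia))
      as [Hp [Hu Hl]].
    replace (S i - 1)%nat with i in Hu by lia.
    destruct (IH ltac:(lia)) as [_ Hi2]. split; [exact Hp|].
    simpl. assert (0 < r) by lra. nra.
Qed.

Definition Mx (u : nat -> R) (j : nat) := Rmax (Rabs (u j)) (Rabs (u (j - 1)%nat)).

Lemma tri_step (n : nat) (r : R) (u : nat -> R) (i : nat) :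
  0 <= r <= 1 ->
  (forall i, (1 <= i)%nat -> (i < n)%nat ->
     (INR n - INR i) * u (S i) = - r * INR n * u i - INR i * u (i - 1)%nat) ->
  (1 <= i)%nat -> (i < n)%nat -> (2 * i <= n)%nat ->
  Rabs (u (S i)) <= 3 * Mx u i.
Proof.
  intros Hr Hrec H1 H2 H3. unfold Mx.
  assert (E := Hrec i H1 H2).
  set (N := INR n) in *. set (X := INR i) in *.
  assert (HX : 0 < X) by (unfold X; apply lt_0_INR; lia).
  assert (HXN : 2 * X <= N).
  { unfold X, N. replace 2 with (INR 2) by reflexivity. rewrite <- mult_INR. apply le_INR. lia. }
  set (M := Rmax (Rabs (u i)) (Rabs (u (i - 1)%nat))).
  assert (Ha : Rabs (u i) <= M) by apply Rmax_l.
  assert (Hb : Rabs (u (i - 1)%nat) <= M) by apply Rmax_r.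
  assert (HM : 0 <= M) by (apply Rle_trans with (Rabs (u i)); [apply Rabs_pos|exact Ha]).
  apply Rmult_le_reg_l with (N - X); [lra|].
  rewrite <- (Rabs_right (N - X)) by lra. rewrite <- Rabs_mult, E.
  apply Rle_trans with (Rabs (- r * N * u i) + Rabs (INR i * u (i-1)%nat)).
  { unfold Rminus. rewrite <- (Rabs_Ropp (X * _)). apply Rabs_triang. }
  rewrite !Rabs_mult, Rabs_Ropp. fold X.
  rewrite (Rabs_right r) by lra. rewrite (Rabs_right N) by lra. rewrite (Rabs_right X) by lra.
  assert (r * N * Rabs (u i) <= 1 * N * M).
  { apply Rmult_le_compat; try lra. apply Rmult_le_pos; lra. apply Rabs_pos.
    apply Rmult_le_compat_r; lra. }
  assert (X * Rabs (u (i - 1)%nat) <= X * M) by (apply Rmult_le_compat_l; lra).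
  assert (0 <= (N - 2*X)*M) by (apply Rmult_le_pos; lra).
  rewrite (Rabs_right (N - X)) by lra. lra.
Qed.

Lemma tri_iter (n : nat) (r : R) (u : nat -> R) (a : nat) :
  0 <= r <= 1 ->
  (forall i, (1 <= i)%nat -> (i < n)%nat ->
     (INR n - INR i) * u (S i) = - r * INR n * u i - INR i * u (i - 1)%nat) ->
  (1 <= a)%nat ->
  forall w, (a + w <= n)%nat -> (2 * (a + w - 1) <= n)%nat ->
  Mx u (a + w) <= 3 ^ w * Mx u a.
Proof.
  intros Hr Hrec Ha. induction w as [|w IH]; intros H1 H2.
  - rewrite Nat.add_0_r. simpl. lra.
  - assert (IH' := IH ltac:(lia) ltac:(lia)).
    assert (T := tri_step n r u (a + w) Hr Hrec ltac:(lia) ltac:(lia) ltac:(lia)).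
    replace (a + S w)%nat with (S (a + w)) by lia.
    unfold Mx at 1. replace (S (a + w) - 1)%nat with (a + w)%nat by lia.
    assert (HM : 0 <= Mx u (a + w)).
    { unfold Mx. apply Rle_trans with (Rabs (u (a+w)%nat)); [apply Rabs_pos|apply Rmax_l]. }
    assert (Hc : Rabs (u (a + w)%nat) <= Mx u (a + w)) by (unfold Mx; apply Rmax_l).
    simpl. apply Rmax_lub; nra.
Qed.

Definition Jf (n : nat) (r : R) (u : nat -> R) (i : nat) :=
  (INR n - INR i + 1) * u i ^ 2 + INR i * u (i - 1)%nat ^ 2 + r * INR n * u i * u (i - 1)%nat.

Lemma J_le1 (n : nat) (r : R) (u : nat -> R) :
  u 0%nat = 1 -> u 1%nat = - r ->
  (forall i, (1 <= i)%nat -> (i < n)%nat ->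
     (INR n - INR i) * u (S i) = - r * INR n * u i - INR i * u (i - 1)%nat) ->
  forall i, (1 <= i)%nat -> (2 * (i - 1) <= n)%nat -> (i - 1 < n)%nat ->
  (forall j, (j < i)%nat -> Rabs (u j) <= 1) -> Jf n r u i <= 1.
Proof.
  intros H0 H1 Hrec. induction i as [|i IH]; intros Hi1 Hi2 Hi3 Hb; [lia|].
  destruct i as [|i].
  - unfold Jf. simpl. rewrite H0, H1. lra.
  - assert (IH' := IH ltac:(lia) ltac:(lia) ltac:(lia) ltac:(intros; apply Hb; lia)).
    assert (E := Hrec (S i) ltac:(lia) ltac:(lia)).
    unfold Jf in *. replace (S (S i) - 1)%nat with (S i) by lia.
    replace (S i - 1)%nat with i in * by lia.
    set (N := INR n) in *. set (X := INR (S i)) in *.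
    assert (HX1 : INR (S (S i)) = X + 1) by (unfold X; rewrite (S_INR (S i)); reflexivity).
    rewrite HX1.
    assert (HXN : 2 * X <= N).
    { unfold X, N. replace 2 with (INR 2) by reflexivity. rewrite <- mult_INR. apply le_INR. lia. }
    assert (HX : 0 < X) by (unfold X; apply lt_0_INR; lia).
    assert (Hu : u (S i) ^ 2 <= 1).
    { assert (Hb' := Hb (S i) ltac:(lia)). assert (0 <= Rabs (u (S i))) by apply Rabs_pos.
      rewrite <- pow2_abs. simpl. nra. }
    (* identity: (N-X) J(i+1) = X J(i) + (N - 2X) u_i^2 *)
    set (a := u i) in *. set (b := u (S i)) in *. set (c := u (S (S i))) in *.
    assert (Id : (N - X) * ((N - (X + 1) + 1) * c ^ 2 + (X + 1) * b ^ 2 + r * N * c * b)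
               = X * ((N - X + 1) * b ^ 2 + X * a ^ 2 + r * N * b * a) + (N - 2 * X) * b ^ 2).
    { assert (Ec : (N - X) * c = - r * N * b - X * a) by exact E.
      replace ((N - X) * ((N - (X + 1) + 1) * c ^ 2 + (X + 1) * b ^ 2 + r * N * c * b))
        with (((N - X) * c) * ((N - X) * c) + (N - X) * (X + 1) * b ^ 2 + r * N * ((N - X) * c) * b)
        by ring.
      rewrite Ec. ring. }
    apply Rmult_le_reg_l with (N - X); [lra|].
    rewrite Id. nra.
Qed.

Lemma J_lower (n : nat) (r : R) (u : nat -> R) (i : nat) :
  (1 <= i)%nat ->
  (4 * INR i * (INR n - INR i + 1) - r * r * INR n * INR n) * u i ^ 2 <= 4 * INR i * Jf n r u i.
Proof.
  intros Hi. unfold Jf.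
  set (X := INR i). set (N := INR n). set (a := u i). set (b := u (i-1)%nat).
  assert (0 <= (2 * X * b + r * N * a) ^ 2) by (apply pow2_ge_0).
  nra.
Qed.

Lemma pow_le1 (r : R) (i : nat) : 0 <= r <= 1 -> r ^ i <= 1.
Proof. intros H. induction i; simpl; [lra|]. assert (0 <= r ^ i) by (apply pow_le; lra). nra. Qed.

Lemma pow_anti (r : R) (i j : nat) : 0 <= r <= 1 -> (j <= i)%nat -> r ^ i <= r ^ j.
Proof.
  intros H Hij. induction Hij; [lra|]. simpl.
  assert (0 <= r ^ m) by (apply pow_le; lra). nra.
Qed.

Lemma sq_le_abs (x d : R) : 0 <= d -> x ^ 2 <= d * d -> Rabs x <= d.
Proof.
  intros Hd H. rewrite <- pow2_abs in H. assert (0 <= Rabs x) by apply Rabs_pos.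
  simpl in H. nra.
Qed.

Lemma u_bound (n : nat) (r s d : R) (u : nat -> R) (I W : nat) :
  0 < s -> s <= r -> r < 1 -> 0 <= d <= 1 -> u 0%nat = 1 -> u 1%nat = - r ->
  (forall i, (1 <= i)%nat -> (i < n)%nat ->
     (INR n - INR i) * u (S i) = - r * INR n * u i - INR i * u (i - 1)%nat) ->
  (1 <= I)%nat -> (2 * (I + 1 + W) <= n)%nat ->
  INR I * (1 - s * s) <= INR n * (r * s - s * s) ->
  3 ^ W * r ^ I <= d ->
  (forall i, (I + 1 + W < i)%nat -> (2 * i <= n)%nat ->
     0 < 4 * INR i * (INR n - INR i + 1) - r * r * INR n * INR n /\
     4 * INR i / (4 * INR i * (INR n - INR i + 1) - r * r * INR n * INR n) <= d * d) ->
  forall i, (3 <= i)%nat -> (2 * i <= n)%nat -> Rabs (u i) <= Rmax (r ^ 3) d.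
Proof.
  intros Hs Hsr Hr1 Hd H0 H1 Hrec HI1 HIW Hcond Hwin HJ.
  assert (Hr0 : 0 < r) by lra.
  set (v := fun i => (-1) ^ i * u i).
  assert (Hv0 : v 0%nat = 1) by (unfold v; simpl; rewrite H0; ring).
  assert (Hv1 : v 1%nat = r) by (unfold v; simpl; rewrite H1; ring).
  assert (Hvrec : forall i, (1 <= i)%nat -> (i < n)%nat ->
     (INR n - INR i) * v (S i) = r * INR n * v i - INR i * v (i - 1)%nat).
  { intros i Hi1 Hi2. unfold v.
    assert (E := Hrec i Hi1 Hi2).
    destruct i as [|j]; [lia|]. replace (S j - 1)%nat with j in * by lia.
    change ((-1)^(S (S j))) with ((-1) * ((-1) * (-1)^j)).
    change ((-1)^(S j)) with ((-1) * (-1)^j).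
    replace ((INR n - INR (S j)) * (-1 * (-1 * (-1) ^ j) * u (S (S j))))
      with ((-1) ^ j * ((INR n - INR (S j)) * u (S (S j)))) by ring.
    rewrite E. ring. }
  assert (Huv : forall i, Rabs (u i) = Rabs (v i)).
  { intros i. unfold v. rewrite Rabs_mult, pow_1_abs. ring. }
  assert (HIn : (I < n)%nat) by lia.
  assert (Hsig := sigma_pow n r s v I Hs Hsr Hr1 Hv0 Hv1 Hvrec HIn Hcond).
  assert (Hr3 : r ^ 3 <= 1) by (simpl; nra).
  assert (Hr01 : 0 <= r <= 1) by lra.
  assert (Main : forall i, (2 * i <= n)%nat ->
     Rabs (u i) <= 1 /\ ((3 <= i)%nat -> Rabs (u i) <= Rmax (r ^ 3) d)).
  { intro i. induction i as [i IH] using (well_founded_induction lt_wf). intros Hi2.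
    destruct (le_lt_dec i (S I)) as [Hle|Hgt].
    - destruct (Hsig i Hle) as [Hp Hp2]. rewrite Huv, Rabs_right by lra.
      split.
      + apply Rle_trans with (r ^ i); [exact Hp2|apply pow_le1; lra].
      + intros H3. apply Rle_trans with (r ^ 3); [|apply Rmax_l].
        apply Rle_trans with (r ^ i); [exact Hp2|apply pow_anti; [lra|lia]].
    - destruct (le_lt_dec i (I + 1 + W)) as [Hle2|Hgt2].
      + assert (Ti := tri_iter n r u (S I) Hr01 Hrec ltac:(lia) (i - S I) ltac:(lia) ltac:(lia)).
        replace (S I + (i - S I))%nat with i in Ti by lia.
        assert (Hui : Rabs (u i) <= Mx u i) by (unfold Mx; apply Rmax_l).
        assert (HMa : Mx u (S I) <= r ^ I).
        { unfold Mx. replace (S I - 1)%nat with I by lia. rewrite !Huv.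
          destruct (Hsig (S I) ltac:(lia)) as [Ha1 Ha2].
          destruct (Hsig I ltac:(lia)) as [Hb1 Hb2].
          rewrite !Rabs_right by lra. apply Rmax_lub; [|exact Hb2].
          apply Rle_trans with (r ^ S I); [exact Ha2|apply pow_anti; [lra|lia]]. }
        assert (H3w : 3 ^ (i - S I) <= 3 ^ W) by (apply Rle_pow; [lra|lia]).
        assert (HMa0 : 0 <= Mx u (S I)).
        { unfold Mx. apply Rle_trans with (Rabs (u (S I))); [apply Rabs_pos|apply Rmax_l]. }
        assert (Hrp : 0 <= r ^ I) by (apply pow_le; lra).
        assert (H3p : 0 <= 3 ^ (i - S I)) by (apply pow_le; lra).
        assert (Hfin : Rabs (u i) <= d).
        { apply Rle_trans with (3 ^ (i - S I) * Mx u (S I)); [lra|].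
          apply Rle_trans with (3 ^ W * r ^ I); [|exact Hwin].
          apply Rmult_le_compat; lra. }
        split; [lra|]. intros _. apply Rle_trans with d; [exact Hfin|apply Rmax_r].
      + destruct (HJ i Hgt2 Hi2) as [Hden Hq].
        assert (HJi : Jf n r u i <= 1).
        { apply (J_le1 n r u H0 H1 Hrec i ltac:(lia) ltac:(lia) ltac:(lia)).
          intros j Hj. apply (IH j Hj ltac:(lia)). }
        assert (HL := J_lower n r u i ltac:(lia)).
        assert (HXp : 0 < INR i) by (apply lt_0_INR; lia).
        assert (Hsq : u i ^ 2 <= d * d).
        { apply Rle_trans with (4 * INR i / (4 * INR i * (INR n - INR i + 1) - r * r * INR n * INR n));
            [|exact Hq].
          apply Rmult_le_reg_l with (4 * INR i * (INR n - INR i + 1) - r * r * INR n * INR n);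
            [exact Hden|].
          set (D := 4 * INR i * (INR n - INR i + 1) - r * r * INR n * INR n) in *.
          replace (D * (4 * INR i / D)) with (4 * INR i) by (field; lra).
          assert (4 * INR i * Jf n r u i <= 4 * INR i * 1) by (apply Rmult_le_compat_l; lra).
          lra. }
        assert (Hfin := sq_le_abs (u i) d ltac:(lra) Hsq).
        split; [lra|]. intros _. apply Rle_trans with d; [exact Hfin|apply Rmax_r]. }
  intros i Hi3 Hi2. apply (Main i Hi2). exact Hi3.
Qed.

From Stdlib Require Import Reals Lra Lia Arith Factorial.
Open Scope R_scope.

Lemma C_pos n j : (j <= n)%nat -> 0 < C n j.
Proof.
  intros H. unfold C. apply Rdiv_lt_0_compat.
  - apply lt_0_INR, lt_O_fact.
  - apply Rmult_lt_0_compat; apply lt_0_INR, lt_O_fact.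
Qed.

Definition uu n j i := MC.KP n j i / C n j.

Lemma UF n j : (1 <= n)%nat -> (j <= n)%nat ->
  uu n j 0 = 1 /\ uu n j 1 = 1 - 2 * INR j / INR n /\
  (forall i, (1 <= i)%nat -> (i < n)%nat ->
    (INR n - INR i) * uu n j (S i) = (INR n - 2 * INR j) * uu n j i - INR i * uu n j (i - 1)%nat) /\
  (forall i, (i <= n)%nat -> uu n j (n - i)%nat = (-1) ^ j * uu n j i).
Proof.
  intros Hn Hj.
  assert (HC := C_pos n j Hj).
  assert (HN : 0 < INR n) by (apply lt_0_INR; lia).
  assert (U0 : uu n j 0 = 1) by (unfold uu; rewrite KP_0 by exact Hj; field; lra).
  assert (Ur : forall i, (i <= n)%nat ->
    (INR n - INR i) * uu n j (S i) - INR n * uu n j i + INR i * uu n j (i - 1)%nat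
      + 2 * INR j * uu n j i = 0).
  { intros i Hi. assert (E := KP_rec n j i Hi). unfold uu.
    replace ((INR n - INR i) * (MC.KP n j (S i) / C n j) - INR n * (MC.KP n j i / C n j) +
      INR i * (MC.KP n j (i - 1) / C n j) + 2 * INR j * (MC.KP n j i / C n j))
    with (((INR n - INR i) * MC.KP n j (S i) - INR n * MC.KP n j i +
      INR i * MC.KP n j (i - 1) + 2 * INR j * MC.KP n j i) / C n j) by (field; lra).
    rewrite E. unfold Rdiv. ring. }
  assert (U1 : uu n j 1 = 1 - 2 * INR j / INR n).
  { assert (E := Ur 0%nat ltac:(lia)). simpl INR in E. rewrite U0 in E.
    apply Rmult_eq_reg_l with (INR n); [|lra]. field_simplify; [|lra].
    replace (INR n - 0) with (INR n) in E by ring. lra. }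
  assert (Urec : forall i, (1 <= i)%nat -> (i < n)%nat ->
    (INR n - INR i) * uu n j (S i) = (INR n - 2 * INR j) * uu n j i - INR i * uu n j (i - 1)%nat).
  { intros i H1 H2. assert (E := Ur i ltac:(lia)). lra. }
  assert (Un : uu n j n = (-1) ^ j).
  { unfold uu. rewrite KP_n by exact Hj. field. lra. }
  assert (Un1 : uu n j (n - 1)%nat = (1 - 2 * INR j / INR n) * (-1) ^ j).
  { assert (E := Ur n ltac:(lia)). rewrite Un in E.
    apply Rmult_eq_reg_l with (INR n); [|lra]. field_simplify; [|lra].
    replace (INR n - INR n) with 0 in E by ring. lra. }
  repeat split; try assumption.
  apply (rec_unique n (INR n - 2 * INR j) (fun i => uu n j (n - i)%nat) (fun i => (-1) ^ j * uu n j i)).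
  - simpl. rewrite Nat.sub_0_r, Un, U0. ring.
  - simpl. rewrite Un1, U1. ring.
  - intros l H1 H2. simpl.
    assert (E := Urec (n - l)%nat ltac:(lia) ltac:(lia)).
    replace (S (n - l)) with (n - (l - 1))%nat in E by lia.
    replace (n - l - 1)%nat with (n - S l)%nat in E by lia.
    rewrite minus_INR in E by lia.
    replace (INR n - (INR n - INR l)) with (INR l) in E by ring.
    assert (HL : INR (l - 1) = INR l - 1) by (rewrite minus_INR by lia; reflexivity).
    lra.
  - intros l H1 H2. simpl. assert (E := Urec l H1 H2).
    replace ((INR n - INR l) * ((-1) ^ j * uu n j (S l)))
      with ((-1) ^ j * ((INR n - INR l) * uu n j (S l))) by ring.
    rewrite E. ring.
Qed.

Lemma sum1_two n f k : (1 <= k)%nat -> (S k <= n)%nat ->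
  (forall j, j <> k -> j <> S k -> f j = 0) -> sum1 n f = f k + f (S k).
Proof.
  intros Hk Hkn Hf.
  assert (G : forall m, sum1 m f = (if Nat.leb k m then f k else 0) + (if Nat.leb (S k) m then f (S k) else 0)).
  { induction m as [|m IH].
    - simpl. destruct k; [lia|]. simpl. ring.
    - simpl sum1. rewrite IH.
      destruct (Nat.eq_dec (S m) k) as [E|E].
      + subst k. rewrite (proj2 (Nat.leb_nle (S m) m) ltac:(lia)).
        rewrite (proj2 (Nat.leb_le (S m) (S m)) ltac:(lia)).
        rewrite (proj2 (Nat.leb_nle (S (S m)) m) ltac:(lia)).
        rewrite (proj2 (Nat.leb_nle (S (S m)) (S m)) ltac:(lia)). ring.
      + destruct (Nat.eq_dec (S m) (S k)) as [E2|E2].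
        * injection E2 as E2. subst m.
          rewrite (proj2 (Nat.leb_le k k) ltac:(lia)).
          rewrite (proj2 (Nat.leb_le k (S k)) ltac:(lia)).
          rewrite (proj2 (Nat.leb_nle (S k) k) ltac:(lia)).
          rewrite (proj2 (Nat.leb_le (S k) (S k)) ltac:(lia)). ring.
        * rewrite (Hf (S m) E E2).
          destruct (Nat.leb_spec0 k m); destruct (Nat.leb_spec0 k (S m));
          destruct (Nat.leb_spec0 (S k) m); destruct (Nat.leb_spec0 (S k) (S m));
          try lia; ring. }
  rewrite G. rewrite (proj2 (Nat.leb_le k n) ltac:(lia)).
  rewrite (proj2 (Nat.leb_le (S k) n) ltac:(lia)). reflexivity.
Qed.

Lemma Kraw_uu n j i : (j <= n)%nat -> (i <= n)%nat -> Kraw n j (INR i) = C n j * uu n j i.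
Proof.
  intros Hj Hi. rewrite Kraw_KP by exact Hi. unfold uu.
  assert (HC := C_pos n j Hj). field. lra.
Qed.

Lemma pow_m1_even p : (-1) ^ (2 * p) = 1.
Proof. rewrite pow_Rsqr. replace (Rsqr (-1)) with 1 by (unfold Rsqr; ring). apply pow1. Qed.

Lemma kk_even beta n : exists p, kk beta n = (2 * p)%nat.
Proof. unfold kk. eexists. reflexivity. Qed.

Lemma feasible_of (beta : R) (n : nat) (M : R) :
  let k := kk beta n in
  let t := INR k / INR n in let e := 1 / INR n in
  let D := 2 * t - 1 + e * (2 * t + 2 * e - 1) in
  let A := (1 + 2 * (t + e) ^ 2 - 2 * (t + e) - e) / (2 * t * D) in
  let B := (1 - t) / D in
  (6 <= n)%nat -> (1 <= k)%nat -> (k + 2 <= n)%nat -> 0 < D -> 0 <= A -> 0 <= B ->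
  (forall i, (3 <= i)%nat -> (2 * i <= n)%nat ->
      Rabs (uu n k i) <= M /\ Rabs (uu n (S k) i) <= M) ->
  (1 - 2 * t) * A + (1 - 2 * (t + e)) * B - (A + B) * M >= -1 ->
  ((1 - 2 * t) - uu n k 2) * A + ((1 - 2 * (t + e)) + uu n (S k) 2) * B >= -1 ->
  2 * (1 - 2 * (t + e)) * B >= -1 ->
  LP_feasible n (xstar beta n).
Proof.
  intros k t e D A B Hn Hk Hkn HD HA HB Hbd Hgen Hn2 Hn1.
  assert (HN : 0 < INR n) by (apply lt_0_INR; lia).
  assert (HK : 0 < INR k) by (apply lt_0_INR; lia).
  assert (Ht : 0 < t) by (unfold t; apply Rdiv_lt_0_compat; lra).
  assert (HCk := C_pos n k ltac:(lia)).
  assert (HCk1 := C_pos n (S k) ltac:(lia)).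
  assert (Xk : xstar beta n k = A / C n k).
  { unfold xstar. fold k. rewrite Nat.eqb_refl. fold t e D. unfold A. field.
    repeat split; lra. }
  assert (Xk1 : xstar beta n (S k) = B / C n (S k)).
  { unfold xstar. fold k. rewrite (proj2 (Nat.eqb_neq (S k) k) ltac:(lia)).
    rewrite Nat.eqb_refl. fold t e D. unfold B. field. lra. }
  assert (X0 : forall j, j <> k -> j <> S k -> xstar beta n j = 0).
  { intros j H1 H2. unfold xstar. fold k.
    rewrite (proj2 (Nat.eqb_neq j k) H1). rewrite (proj2 (Nat.eqb_neq j (S k)) H2). reflexivity. }
  destruct (UF n k ltac:(lia) ltac:(lia)) as [U0 [U1 [Urec Usym]]].
  destruct (UF n (S k) ltac:(lia) ltac:(lia)) as [V0 [V1 [Vrec Vsym]]].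
  destruct (kk_even beta n) as [p Hp]. fold k in Hp.
  assert (Sk : (-1) ^ k = 1) by (rewrite Hp; apply pow_m1_even).
  assert (Sk1 : (-1) ^ (S k) = -1) by (simpl; rewrite Sk; ring).
  rewrite S_INR in V1. fold t e in U1, V1.
  replace (1 - 2 * INR k / INR n) with (1 - 2 * t) in U1 by (unfold t; field; lra).
  replace (1 - 2 * (INR k + 1) / INR n) with (1 - 2 * (t + e)) in V1 by (unfold t, e; field; lra).
  split.
  - intros j Hj. destruct (Nat.eq_dec j k) as [->|H1].
    + rewrite Xk. apply Rmult_le_pos; [exact HA|]. left. apply Rinv_0_lt_compat. exact HCk.
    + destruct (Nat.eq_dec j (S k)) as [->|H2].
      * rewrite Xk1. apply Rmult_le_pos; [exact HB|]. left. apply Rinv_0_lt_compat. exact HCk1.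
      * rewrite X0 by assumption. lra.
  - intros i Hi.
    rewrite (sum1_two n _ k ltac:(lia) ltac:(lia)).
    2: { intros j H1 H2. rewrite X0 by assumption. ring. }
    rewrite Xk, Xk1.
    change 1 with (INR 1).
    rewrite !Kraw_uu by lia.
    change (INR 1) with 1.
    rewrite U1, V1.
    replace ((C n k * (1 - 2 * t) - C n k * uu n k i) * (A / C n k) +
      (C n (S k) * (1 - 2 * (t + e)) - C n (S k) * uu n (S k) i) * (B / C n (S k)))
      with (((1 - 2 * t) - uu n k i) * A + ((1 - 2 * (t + e)) - uu n (S k) i) * B)
      by (field; lra).
    assert (HN1 : 1 < INR n) by (replace 1 with (INR 1) by reflexivity; apply lt_INR; lia).
    assert (E2k : uu n k 2 = ((INR n - 2 * INR k) * (1 - 2 * t) - 1) / (INR n - 1)).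
    { assert (E := Urec 1%nat ltac:(lia) ltac:(lia)). simpl in E. rewrite U0, U1 in E.
      apply Rmult_eq_reg_l with (INR n - 1); [|lra]. rewrite E. field. lra. }
    assert (E2k1 : uu n (S k) 2 = ((INR n - 2 * (INR k + 1)) * (1 - 2 * (t + e)) - 1) / (INR n - 1)).
    { assert (E := Vrec 1%nat ltac:(lia) ltac:(lia)). change (INR 1) with 1 in E.
      replace (1 - 1)%nat with 0%nat in E by lia. rewrite V0, V1 in E.
      rewrite S_INR in E. apply Rmult_eq_reg_l with (INR n - 1); [|lra]. rewrite E. field. lra. }
    assert (HD' : 2 * INR k * INR n - INR n * INR n + 2 * INR k + 2 - INR n <> 0).
    { unfold D, t, e in HD.
      replace (2 * (INR k / INR n) - 1 + 1 / INR n * (2 * (INR k / INR n) + 2 * (1 / INR n) - 1))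
        with ((2 * INR k * INR n - INR n * INR n + 2 * INR k + 2 - INR n) / (INR n * INR n)) in HD
        by (field; lra).
      intro Hz. rewrite Hz in HD. unfold Rdiv in HD. rewrite Rmult_0_l in HD. lra. }
    destruct (Nat.eq_dec i 2) as [->|Hi2].
    { rewrite E2k, E2k1. right. unfold A, B, D, t, e. field. repeat split; lra. }
    destruct (Nat.eq_dec i n) as [->|Hin].
    { assert (Un : uu n k n = 1) by (rewrite <- (Nat.sub_0_r n) at 2; rewrite Usym by lia; rewrite U0, Sk; ring).
      assert (Vn : uu n (S k) n = -1) by (rewrite <- (Nat.sub_0_r n) at 2; rewrite Vsym by lia; rewrite V0, Sk1; ring).
      rewrite Un, Vn. right. unfold A, B, D, t, e. field. repeat split; lra. }
    destruct (Nat.eq_dec i (n - 1)) as [->|Hin1].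
    { rewrite Usym, Vsym by lia. rewrite U1, V1, Sk, Sk1. lra. }
    destruct (Nat.eq_dec i (n - 2)) as [->|Hin2].
    { rewrite Usym, Vsym by lia. rewrite Sk, Sk1. lra. }
    assert (Hb : Rabs (uu n k i) <= M /\ Rabs (uu n (S k) i) <= M).
    { destruct (le_lt_dec (2 * i) n) as [Hle|Hgt].
      - apply Hbd; lia.
      - replace i with (n - (n - i))%nat by lia.
        rewrite Usym, Vsym by lia. rewrite Sk, Sk1.
        rewrite Rmult_1_l.
        replace (-1 * uu n (S k) (n - i)%nat) with (- uu n (S k) (n - i)%nat) by ring.
        rewrite Rabs_Ropp. apply Hbd; lia. }
    destruct Hb as [Hb1 Hb2].
    assert (H1 : - uu n k i * A >= - M * A).
    { assert (uu n k i <= M) by (apply Rle_trans with (Rabs (uu n k i)); [apply Rle_abs|exact Hb1]).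
      apply Rle_ge. apply Rmult_le_compat_r; lra. }
    assert (H2 : - uu n (S k) i * B >= - M * B).
    { assert (uu n (S k) i <= M) by (apply Rle_trans with (Rabs (uu n (S k) i)); [apply Rle_abs|exact Hb2]).
      apply Rle_ge. apply Rmult_le_compat_r; lra. }
    lra.
Qed.

From Stdlib Require Import Reals Lra Lia Arith Factorial ZArith.
From Coquelicot Require Import Rcomplements Rbar Hierarchy Lim_seq.
Open Scope R_scope.

Lemma ev_gt (f : nat -> R) (l c : R) : is_lim_seq f l -> c < l -> eventually (fun n => c < f n).
Proof.
  intros H Hc. apply is_lim_seq_spec in H.
  destruct (H (mkposreal (l - c) ltac:(lra))) as [N HN].
  exists N. intros n Hn. specialize (HN n Hn). simpl in HN.
  apply Rabs_def2 in HN. lra.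
Qed.

Lemma ev_lt (f : nat -> R) (l c : R) : is_lim_seq f l -> l < c -> eventually (fun n => f n < c).
Proof.
  intros H Hc. apply is_lim_seq_spec in H.
  destruct (H (mkposreal (c - l) ltac:(lra))) as [N HN].
  exists N. intros n Hn. specialize (HN n Hn). simpl in HN.
  apply Rabs_def2 in HN. lra.
Qed.

Lemma ev_nat (N : nat) : eventually (fun n => (N <= n)%nat).
Proof. exists N. auto. Qed.

Lemma ev_and (P Q : nat -> Prop) : eventually P -> eventually Q -> eventually (fun n => P n /\ Q n).
Proof. intros [N1 H1] [N2 H2]. exists (max N1 N2). intros n Hn. split; [apply H1|apply H2]; lia. Qed.

Lemma ev_imp (P Q : nat -> Prop) : (forall n, P n -> Q n) -> eventually P -> eventually Q.
Proof. intros H [N HN]. exists N. intros n Hn. apply H, HN, Hn. Qed.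

Lemma lim_pow (u : nat -> R) (l : R) (m : nat) : is_lim_seq u l -> is_lim_seq (fun n => u n ^ m) (l ^ m).
Proof.
  intros H. induction m as [|m IH].
  - simpl. apply is_lim_seq_const.
  - simpl. apply (is_lim_seq_mult' _ _ _ _ H IH).
Qed.

Lemma lim_inv_n : is_lim_seq (fun n => 1 / INR n) 0.
Proof.
  assert (H := is_lim_seq_inv _ _ is_lim_seq_INR ltac:(discriminate)).
  simpl in H. eapply is_lim_seq_ext; [|exact H]. intros n. simpl. unfold Rdiv. ring.
Qed.

Definition nfloor (y : R) : nat := Z.to_nat (Int_part y).

Lemma nfloor_spec (y : R) : 0 <= y -> INR (nfloor y) <= y /\ y < INR (nfloor y) + 1.
Proof.
  intros Hy. unfold nfloor. destruct (base_Int_part y) as [H1 H2].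
  assert (Hz : (0 <= Int_part y)%Z).
  { assert (-1 < IZR (Int_part y)) by lra. apply lt_IZR in H. lia. }
  rewrite INR_IZR_INZ, Z2Nat.id by exact Hz. lra.
Qed.

Lemma kk_bounds (beta : R) (n : nat) : 0 < beta ->
  INR (kk beta n) <= beta * INR n /\ beta * INR n - 2 < INR (kk beta n).
Proof.
  intros Hb. unfold kk.
  assert (Hy : 0 <= beta * INR n / 2) by (assert (0 <= INR n) by apply pos_INR;
    apply Rmult_le_pos; [apply Rmult_le_pos; lra|lra]).
  destruct (nfloor_spec _ Hy) as [H1 H2]. unfold nfloor in H1, H2.
  rewrite mult_INR. replace (INR 2) with 2 by (simpl; ring). lra.
Qed.

Lemma lim_floor (x : R) : 0 <= x -> is_lim_seq (fun n => INR (nfloor (x * INR n)) / INR n) x.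
Proof.
  intros Hx.
  apply is_lim_seq_le_le_loc with (u := fun n => x - 1 / INR n) (w := fun n => x).
  - exists 1%nat. intros n Hn. assert (HN : 0 < INR n) by (apply lt_0_INR; lia).
    assert (Hy : 0 <= x * INR n) by (apply Rmult_le_pos; lra).
    destruct (nfloor_spec _ Hy) as [H1 H2].
    assert (Hi : 0 <= / INR n) by (left; apply Rinv_0_lt_compat; lra). split.
    + replace (x - 1 / INR n) with ((x * INR n - 1) / INR n) by (field; lra).
      unfold Rdiv. apply Rmult_le_compat_r; lra.
    + replace x with (x * INR n / INR n) at 2 by (field; lra).
      unfold Rdiv. apply Rmult_le_compat_r; lra.
  - replace (Finite x) with (Finite (x - 0)) by (f_equal; ring).
    apply is_lim_seq_minus'; [apply is_lim_seq_const|apply lim_inv_n].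
  - apply is_lim_seq_const.
Qed.

Lemma params (rho : R) : 0 < rho < 1 ->
  exists (L : nat) (x1 sg : R),
    (1 <= L)%nat /\ 3 * ((1 + rho) / 2) ^ L < 1 /\ 0 < x1 /\ 0 < sg < rho /\
    x1 * (1 - sg * sg) < rho * sg - sg * sg /\
    x1 * (1 + 1 / (2 * INR L)) < 1 / 2 /\
    rho * rho < 4 * (x1 * (1 + 1 / (2 * INR L))) * (1 - x1 * (1 + 1 / (2 * INR L))).
Proof.
  intros Hr.
  set (sq := sqrt (1 - rho * rho)).
  assert (Hsq2 : sq * sq = 1 - rho * rho) by (unfold sq; apply sqrt_sqrt; nra).
  assert (Hsq0 : 0 < sq) by (unfold sq; apply sqrt_lt_R0; nra).
  assert (Hsq1 : sq < 1) by nra.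
  set (x0 := (1 - sq) / 2).
  assert (Hx0 : 0 < x0 < 1/2) by (unfold x0; lra).
  assert (Hx0r : 4 * x0 * (1 - x0) = rho * rho) by (unfold x0; nra).
  set (q := (1 + rho) / 2).
  assert (Hq : Rabs q < 1) by (unfold q; rewrite Rabs_right; lra).
  destruct (pow_lt_1_zero q Hq (1/3) ltac:(lra)) as [N1 HN1].
  assert (Hy : 0 <= x0 / (2 * sq)) by (apply Rmult_le_pos; [lra|left; apply Rinv_0_lt_compat; lra]).
  set (N2 := S (nfloor (x0 / (2 * sq)))).
  assert (HN2 : x0 / (2 * sq) < INR N2).
  { destruct (nfloor_spec _ Hy) as [_ H]. unfold N2. rewrite S_INR. lra. }
  set (L := max (max N1 N2) 1).
  assert (HL1 : (1 <= L)%nat) by (unfold L; lia).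
  set (l := INR L) in *.
  assert (Hl1 : 1 <= l) by (unfold l; replace 1 with (INR 1) by reflexivity; apply le_INR; lia).
  assert (Hl2 : x0 / (2 * sq) < l).
  { apply Rlt_le_trans with (INR N2); [exact HN2|]. unfold l. apply le_INR. unfold L. lia. }
  assert (Hl2' : x0 < 2 * sq * l).
  { apply Rmult_lt_compat_l with (r := 2 * sq) in Hl2; [|lra].
    replace (2 * sq * (x0 / (2 * sq))) with x0 in Hl2 by (field; lra). exact Hl2. }
  set (x1 := x0 * (4 * l + 1) / (4 * l + 2)).
  assert (Hx1 : 0 < x1 < x0).
  { unfold x1. split.
    - apply Rdiv_lt_0_compat; nra.
    - apply Rmult_lt_reg_r with (4 * l + 2); [lra|]. field_simplify; nra. }
  set (sg := rho / (2 * (1 - x1))).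
  exists L, x1, sg.
  assert (Hq3 : 3 * q ^ L < 1).
  { assert (H := HN1 L ltac:(unfold L; lia)). rewrite Rabs_right in H.
    - lra.
    - apply Rle_ge, pow_le. unfold q; lra. }
  split; [exact HL1|]. split; [exact Hq3|]. split; [lra|].
  split.
  { unfold sg. split.
    - apply Rdiv_lt_0_compat; lra.
    - apply Rmult_lt_reg_r with (2 * (1 - x1)); [lra|]. field_simplify; [|lra]. nra. }
  split.
  { assert (E : rho * sg - sg * sg - x1 * (1 - sg * sg) = (rho * rho - 4 * x1 * (1 - x1)) / (4 * (1 - x1))).
    { unfold sg. field. lra. }
    assert (P : 0 < (rho * rho - 4 * x1 * (1 - x1)) / (4 * (1 - x1))).
    { apply Rdiv_lt_0_compat; [|lra]. rewrite <- Hx0r. nra. }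
    lra. }
  fold l.
  assert (Ex2 : x1 * (1 + 1 / (2 * l)) = x0 * (4 * l + 1) / (4 * l)) by (unfold x1; field; lra).
  rewrite Ex2.
  assert (Hx2a : x0 < x0 * (4 * l + 1) / (4 * l)).
  { apply Rmult_lt_reg_r with (4 * l); [lra|]. field_simplify; nra. }
  assert (Hx2b : x0 * (4 * l + 1) / (4 * l) < 1 / 2).
  { apply Rmult_lt_reg_r with (4 * l); [lra|]. field_simplify; [|lra].
    unfold x0 in *. nra. }
  split; [exact Hx2b|].
  set (x2 := x0 * (4 * l + 1) / (4 * l)) in *.
  rewrite <- Hx0r. nra.
Qed.

Definition Jreg (n : nat) (r d : R) (a : nat) :=
  forall i, (a < i)%nat -> (2 * i <= n)%nat ->
     0 < 4 * INR i * (INR n - INR i + 1) - r * r * INR n * INR n /\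
     4 * INR i / (4 * INR i * (INR n - INR i + 1) - r * r * INR n * INR n) <= d * d.

Lemma Wdiv (I L : nat) : (1 <= L)%nat ->
  INR I / (2 * INR L) - 1 < INR (I / (2 * L)) /\ INR (I / (2 * L)) <= INR I / (2 * INR L)
  /\ (2 * L * (I / (2 * L)) <= I)%nat.
Proof.
  intros HL. assert (Hne : (2 * L <> 0)%nat) by lia.
  assert (E := Nat.div_mod I (2 * L) Hne).
  assert (Hm := Nat.mod_upper_bound I (2 * L) Hne).
  set (W := (I / (2 * L))%nat) in *. set (m := (I mod (2 * L))%nat) in *.
  assert (HLr : 1 <= INR L) by (replace 1 with (INR 1) by reflexivity; apply le_INR; lia).
  assert (EI : INR I = 2 * INR L * INR W + INR m).
  { rewrite E at 1. rewrite plus_INR, !mult_INR. simpl (INR 2). ring_simplify. reflexivity. }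
  assert (Hm' : INR m + 1 <= 2 * INR L).
  { rewrite <- S_INR. replace 2 with (INR 2) by reflexivity. rewrite <- mult_INR. apply le_INR. lia. }
  assert (Hm0 : 0 <= INR m) by apply pos_INR.
  split; [|split; [|lia]].
  - apply Rmult_lt_reg_r with (2 * INR L); [lra|]. rewrite EI. field_simplify; lra.
  - apply Rmult_le_reg_r with (2 * INR L); [lra|]. rewrite EI. field_simplify; lra.
Qed.

Lemma ev_conds (rho : R) (L : nat) (x1 sg d : R) (r : nat -> R) :
  0 < rho < 1 -> (1 <= L)%nat -> 3 * ((1 + rho) / 2) ^ L < 1 -> 0 < x1 -> 0 < sg < rho ->
  x1 * (1 - sg * sg) < rho * sg - sg * sg ->
  x1 * (1 + 1 / (2 * INR L)) < 1 / 2 ->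
  rho * rho < 4 * (x1 * (1 + 1 / (2 * INR L))) * (1 - x1 * (1 + 1 / (2 * INR L))) ->
  0 < d ->
  is_lim_seq r rho ->
  eventually (fun n => sg <= r n < 1 /\ (1 <= nfloor (x1 * INR n))%nat /\
     (2 * (nfloor (x1 * INR n) + 1 + nfloor (x1 * INR n) / (2 * L)) <= n)%nat /\
     INR (nfloor (x1 * INR n)) * (1 - sg * sg) <= INR n * (r n * sg - sg * sg) /\
     3 ^ (nfloor (x1 * INR n) / (2 * L)) * r n ^ (nfloor (x1 * INR n)) <= d /\
     Jreg n (r n) d (nfloor (x1 * INR n) + 1 + nfloor (x1 * INR n) / (2 * L))).
Proof.
  intros Hrho HL Hq3 Hx1 Hsg Hcond Hx2 Hgam Hd Hr.
  set (l := INR L) in *.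
  assert (Hl : 1 <= l) by (unfold l; replace 1 with (INR 1) by reflexivity; apply le_INR; lia).
  set (x2 := x1 * (1 + 1 / (2 * l))) in *.
  set (I := fun n => nfloor (x1 * INR n)).
  set (W := fun n => (I n / (2 * L))%nat).
  change (eventually (fun n => sg <= r n < 1 /\ (1 <= I n)%nat /\ (2 * (I n + 1 + W n) <= n)%nat /\
     INR (I n) * (1 - sg * sg) <= INR n * (r n * sg - sg * sg) /\
     3 ^ (W n) * r n ^ (I n) <= d /\ Jreg n (r n) d (I n + 1 + W n))).
  assert (HI : is_lim_seq (fun n => INR (I n) / INR n) x1) by (apply lim_floor; lra).
  assert (HY : is_lim_seq (fun n => INR (I n + 1 + W n) / INR n) x2).
  { apply is_lim_seq_le_le_loc with (u := fun n => INR (I n) / INR n * (1 + 1 / (2 * l)))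
       (w := fun n => INR (I n) / INR n * (1 + 1 / (2 * l)) + 1 / INR n).
    - exists 1%nat. intros n Hn. assert (HN : 0 < INR n) by (apply lt_0_INR; lia).
      destruct (Wdiv (I n) L HL) as [W1 [W2 _]]. fold (W n) in W1, W2. fold l in W1, W2.
      rewrite !plus_INR. simpl (INR 1).
      assert (Hi : 0 <= / INR n) by (left; apply Rinv_0_lt_compat; lra).
      split.
      + replace (INR (I n) / INR n * (1 + 1 / (2 * l))) with ((INR (I n) + INR (I n) / (2 * l)) / INR n)
          by (field; lra).
        unfold Rdiv at 1 3. apply Rmult_le_compat_r; [exact Hi|]. unfold Rdiv in W1 |- *. lra.
      + replace (INR (I n) / INR n * (1 + 1 / (2 * l)) + 1 / INR n)
          with ((INR (I n) + INR (I n) / (2 * l) + 1) / INR n) by (field; lra).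
        unfold Rdiv at 1 3. apply Rmult_le_compat_r; [exact Hi|]. unfold Rdiv in W2 |- *. lra.
    - apply (is_lim_seq_mult' _ _ _ _ HI (is_lim_seq_const _)).
    - replace (Finite x2) with (Finite (x1 * (1 + 1 / (2 * l)) + 0)) by (f_equal; unfold x2; ring).
      apply is_lim_seq_plus'; [apply (is_lim_seq_mult' _ _ _ _ HI (is_lim_seq_const _))|apply lim_inv_n]. }
  set (q := (1 + rho) / 2).
  assert (Hq : Rabs q < 1) by (unfold q; rewrite Rabs_right; lra).
  destruct (pow_lt_1_zero q Hq d Hd) as [N0 HN0].
  set (rmin := (x1 * (1 - sg * sg) + sg * sg) / sg).
  assert (Hrmin : rmin < rho).
  { unfold rmin. apply Rmult_lt_reg_r with sg; [lra|]. field_simplify; lra. }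
  set (gam := 4 * x2 * (1 - x2) - rho * rho).
  assert (Hgam0 : 0 < gam) by (unfold gam; lra).
  assert (E1 := ev_gt _ _ sg Hr (proj2 Hsg)).
  assert (E2 := ev_lt _ _ 1 Hr ltac:(lra)).
  assert (E3 := ev_lt _ _ q Hr ltac:(unfold q; lra)).
  assert (E4 := ev_gt _ _ rmin Hr Hrmin).
  assert (E5 := ev_gt _ _ (x1 / 2) HI ltac:(lra)).
  set (N3 := S (nfloor (4 * INR (S N0) / x1))).
  assert (HN3 : 4 * INR (S N0) / x1 < INR N3).
  { assert (Hy : 0 <= 4 * INR (S N0) / x1).
    { apply Rmult_le_pos; [assert (0 <= INR (S N0)) by apply pos_INR; lra|left; apply Rinv_0_lt_compat; lra]. }
    destruct (nfloor_spec _ Hy) as [_ H]. unfold N3. rewrite (S_INR (nfloor _)). lra. }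
  assert (E6 := ev_nat (max N3 1)).
  assert (E7 := ev_lt _ _ (1/2) HY Hx2).
  assert (HG : is_lim_seq (fun n => 4 * (INR (I n + 1 + W n) / INR n) * (1 - INR (I n + 1 + W n) / INR n)
                          - r n * r n) gam).
  { unfold gam. apply is_lim_seq_minus'; [|apply (is_lim_seq_mult' _ _ _ _ Hr Hr)].
    apply is_lim_seq_mult'; [apply (is_lim_seq_mult' _ _ _ _ (is_lim_seq_const _) HY)|].
    apply is_lim_seq_minus'; [apply is_lim_seq_const|exact HY]. }
  assert (E8 := ev_gt _ _ (gam / 2) HG ltac:(lra)).
  assert (HZ : is_lim_seq (fun n => 2 / (d * d) * (1 / INR n)) 0).
  { replace (Finite 0) with (Finite (2 / (d * d) * 0)) by (f_equal; ring).
    apply (is_lim_seq_mult' _ _ _ _ (is_lim_seq_const _) lim_inv_n). }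
  assert (E9 := ev_lt _ _ (gam / 2) HZ ltac:(lra)).
  repeat match goal with H : eventually _ |- _ => revert H end.
  intros E1 E2 E3 E4 E5 E6 E7 E8 E9.
  assert (EE := ev_and _ _ E1 (ev_and _ _ E2 (ev_and _ _ E3 (ev_and _ _ E4 (ev_and _ _ E5
     (ev_and _ _ E6 (ev_and _ _ E7 (ev_and _ _ E8 E9)))))))).
  revert EE. apply ev_imp. intros n [F1 [F2 [F3 [F4 [F5 [F6 [F7 [F8 F9]]]]]]]].
  assert (HN : 0 < INR n) by (apply lt_0_INR; lia).
  assert (HN3n : INR N3 <= INR n) by (apply le_INR; lia).
  assert (Hy : 0 <= x1 * INR n) by (apply Rmult_le_pos; lra).
  destruct (nfloor_spec _ Hy) as [Hf1 Hf2]. fold (I n) in Hf1, Hf2.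
  assert (HIbig : 2 * INR (S N0) < INR (I n)).
  { assert (H1 : x1 / 2 * INR n < INR (I n)).
    { apply Rmult_lt_reg_r with (/ INR n); [apply Rinv_0_lt_compat; lra|].
      replace (x1 / 2 * INR n * / INR n) with (x1 / 2) by (field; lra). exact F5. }
    assert (H2 : 4 * INR (S N0) < x1 * INR n).
    { apply Rmult_lt_reg_r with (/ x1); [apply Rinv_0_lt_compat; lra|].
      replace (x1 * INR n * / x1) with (INR n) by (field; lra).
      unfold Rdiv in HN3. lra. }
    lra. }
  assert (HIn : (2 * S N0 < I n)%nat).
  { apply INR_lt. rewrite mult_INR. simpl (INR 2). replace (1 + 1) with 2 by ring. exact HIbig. }
  destruct (Wdiv (I n) L HL) as [W1 [W2 W3]]. fold (W n) in W1, W2, W3.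
  split; [lra|].
  split; [lia|].
  split.
  { apply INR_le. rewrite mult_INR. simpl (INR 2). replace (1 + 1) with 2 by ring.
    apply Rmult_lt_compat_r with (r := INR n) in F7; [|exact HN].
    replace (INR (I n + 1 + W n) / INR n * INR n) with (INR (I n + 1 + W n)) in F7 by (field; lra).
    lra. }
  split.
  { assert (H1 : INR (I n) * (1 - sg * sg) <= x1 * INR n * (1 - sg * sg))
      by (apply Rmult_le_compat_r; nra).
    assert (H2 : x1 * (1 - sg * sg) <= r n * sg - sg * sg).
    { unfold rmin in F4. apply Rmult_lt_compat_r with (r := sg) in F4; [|lra].
      replace ((x1 * (1 - sg * sg) + sg * sg) / sg * sg) with (x1 * (1 - sg * sg) + sg * sg) in F4
        by (field; lra). lra. }
    assert (H3 : INR n * (x1 * (1 - sg * sg)) <= INR n * (r n * sg - sg * sg))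
      by (apply Rmult_le_compat_l; lra).
    lra. }
  split.
  {
    set (w := W n) in *. set (i := I n) in *.
    assert (Hr0 : 0 <= r n) by lra.
    assert (Hri : r n ^ i <= q ^ i) by (apply pow_incr; lra).
    assert (H3q : (3 * q ^ L) ^ w <= 1).
    { apply pow_le1. split; [|unfold q; lra]. assert (0 <= q ^ L) by (apply pow_le; unfold q; lra). lra. }
    rewrite Rpow_mult_distr in H3q.
    assert (Hqr : q ^ (i - L * w) < d).
    { assert (H := HN0 (i - L * w)%nat ltac:(lia)). rewrite Rabs_right in H; [exact H|].
      apply Rle_ge, pow_le. unfold q; lra. }
    assert (P1 : 0 <= 3 ^ w) by (apply pow_le; lra).
    assert (P2 : 0 <= (q ^ L) ^ w) by (apply pow_le, pow_le; unfold q; lra).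
    assert (P3 : 0 <= q ^ (i - L * w)) by (apply pow_le; unfold q; lra).
    apply Rle_trans with (3 ^ w * q ^ i); [apply Rmult_le_compat_l; assumption|].
    replace i with (L * w + (i - L * w))%nat at 1 by lia.
    rewrite pow_add, pow_mult.
    replace (3 ^ w * ((q ^ L) ^ w * q ^ (i - L * w))) with ((3 ^ w * (q ^ L) ^ w) * q ^ (i - L * w)) by ring.
    assert (((3 ^ w * (q ^ L) ^ w) * q ^ (i - L * w)) <= 1 * q ^ (i - L * w))
      by (apply Rmult_le_compat_r; assumption).
    lra. }
  intros i Hi1 Hi2.
  set (a := (I n + 1 + W n)%nat) in *.
  set (N := INR n) in *. set (X := INR i). set (Y := INR a).
  assert (HXY : Y < X) by (unfold X, Y; apply lt_INR; lia).
  assert (H2X : 2 * X <= N).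
  { unfold X, N. replace 2 with (INR 2) by reflexivity. rewrite <- mult_INR. apply le_INR. lia. }
  assert (HY0 : 0 <= Y) by apply pos_INR.
  assert (HD : gam / 2 * (N * N) < 4 * Y * (N - Y) - r n * r n * N * N).
  { replace (4 * Y * (N - Y) - r n * r n * N * N)
      with ((4 * (Y / N) * (1 - Y / N) - r n * r n) * (N * N)) by (field; lra).
    apply Rmult_lt_compat_r; [nra|exact F8]. }
  assert (HXN : 4 * Y * (N - Y) <= 4 * X * (N - X + 1)) by nra.
  assert (Hden : 4 * Y * (N - Y) - r n * r n * N * N <= 4 * X * (N - X + 1) - r n * r n * N * N) by lra.
  assert (Hgd : 2 * N / (d * d) < gam / 2 * (N * N)).
  { apply Rmult_lt_compat_r with (r := N) in F9; [|lra].
    replace (2 / (d * d) * (1 / N) * N) with (2 / (d * d)) in F9 by (field; lra).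
    apply Rmult_lt_compat_r with (r := N) in F9; [|lra].
    replace (2 / (d * d) * N) with (2 * N / (d * d)) in F9 by (field; lra).
    replace (gam / 2 * N * N) with (gam / 2 * (N * N)) in F9 by ring. exact F9. }
  assert (Hpos : 0 < 2 * N / (d * d)) by (apply Rdiv_lt_0_compat; nra).
  set (den := 4 * X * (N - X + 1) - r n * r n * N * N) in *.
  split; [lra|].
  assert (HX0 : 0 < X) by lra.
  apply Rle_trans with (2 * N / den).
  { unfold Rdiv. apply Rmult_le_compat_r; [left; apply Rinv_0_lt_compat; lra|lra]. }
  apply Rmult_le_reg_r with den; [lra|].
  replace (2 * N / den * den) with (2 * N) by (field; lra).
  assert (2 * N <= d * d * (2 * N / (d * d)) ) by (right; field; nra).
  assert (d * d * (2 * N / (d * d)) <= d * d * den) by (apply Rmult_le_compat_l; nra).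
  lra.
Qed.

From Stdlib Require Import Reals Lra Lia Arith Factorial ZArith.
From Coquelicot Require Import Rcomplements Rbar Hierarchy Lim_seq.
Open Scope R_scope.

Lemma uu_bound (n j : nat) (sg d : R) (I W : nat) :
  (1 <= n)%nat -> (j <= n)%nat -> 0 < sg ->
  sg <= 2 * INR j / INR n - 1 < 1 -> 0 <= d <= 1 -> (1 <= I)%nat -> (2 * (I + 1 + W) <= n)%nat ->
  INR I * (1 - sg * sg) <= INR n * ((2 * INR j / INR n - 1) * sg - sg * sg) ->
  3 ^ W * (2 * INR j / INR n - 1) ^ I <= d ->
  Jreg n (2 * INR j / INR n - 1) d (I + 1 + W) ->
  forall i, (3 <= i)%nat -> (2 * i <= n)%nat ->
    Rabs (uu n j i) <= Rmax ((2 * INR j / INR n - 1) ^ 3) d.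
Proof.
  intros Hn Hj Hsg Hr Hd HI HIW Hc Hw HJ.
  destruct (UF n j Hn Hj) as [U0 [U1 [Urec _]]].
  assert (HN : 0 < INR n) by (apply lt_0_INR; lia).
  apply (u_bound n (2 * INR j / INR n - 1) sg d (uu n j) I W Hsg (proj1 Hr) (proj2 Hr) Hd U0).
  - rewrite U1. field. lra.
  - intros i H1 H2. rewrite (Urec i H1 H2). f_equal. f_equal. field. lra.
  - exact HI.
  - exact HIW.
  - exact Hc.
  - exact Hw.
  - exact HJ.
Qed.

Lemma uu2 (n j : nat) : (2 <= n)%nat -> (j <= n)%nat ->
  uu n j 2 = ((1 - 2 * INR j / INR n) ^ 2 - 1 / INR n) / (1 - 1 / INR n).
Proof.
  intros Hn Hj. destruct (UF n j ltac:(lia) Hj) as [U0 [U1 [Urec _]]].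
  assert (HN1 : 1 < INR n) by (replace 1 with (INR 1) by reflexivity; apply lt_INR; lia).
  assert (E := Urec 1%nat ltac:(lia) ltac:(lia)). change (INR 1) with 1 in E.
  replace (1 - 1)%nat with 0%nat in E by lia. rewrite U0, U1 in E.
  apply Rmult_eq_reg_l with (INR n - 1); [|lra]. rewrite E. field. lra.
Qed.

Definition tq beta n := INR (kk beta n) / INR n.
Definition eq_ (n : nat) := 1 / INR n.
Definition Dq beta n := 2 * tq beta n - 1 + eq_ n * (2 * tq beta n + 2 * eq_ n - 1).
Definition Aq beta n := (1 + 2 * (tq beta n + eq_ n) ^ 2 - 2 * (tq beta n + eq_ n) - eq_ n) / (2 * tq beta n * Dq beta n).
Definition Bq beta n := (1 - tq beta n) / Dq beta n.

Lemma obj_eq (beta a : R) (n : nat) : 0 < a ->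
  (1 <= kk beta n)%nat -> (S (kk beta n) <= n)%nat -> Dq beta n <> 0 ->
  LP_objective n a (xstar beta n) =
   - ((1 + (1 - 2 * tq beta n) * (1 / a - 1)) * Aq beta n
      + (1 + (1 - 2 * (tq beta n + eq_ n)) * (1 / a - 1)) * Bq beta n).
Proof.
  intros Ha Hk Hkn HD. set (k := kk beta n) in *.
  assert (HN : 0 < INR n) by (apply lt_0_INR; lia).
  assert (HK : 0 < INR k) by (apply lt_0_INR; lia).
  assert (Ht : 0 < tq beta n) by (unfold tq; fold k; apply Rdiv_lt_0_compat; lra).
  assert (HCk := C_pos n k ltac:(lia)).
  assert (HCk1 := C_pos n (S k) ltac:(lia)).
  unfold LP_objective.
  rewrite (sum1_two n _ k ltac:(lia) ltac:(lia)).
  2: { intros j H1 H2. unfold xstar. fold k.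
       rewrite (proj2 (Nat.eqb_neq j k) H1), (proj2 (Nat.eqb_neq j (S k)) H2). ring. }
  unfold xstar. fold k. rewrite Nat.eqb_refl.
  rewrite (proj2 (Nat.eqb_neq (S k) k) ltac:(lia)), Nat.eqb_refl.
  assert (Q1 : Kraw n k 0 = C n k * uu n k 0) by exact (Kraw_uu n k 0 ltac:(lia) ltac:(lia)).
  assert (Q2 : Kraw n k 1 = C n k * uu n k 1) by exact (Kraw_uu n k 1 ltac:(lia) ltac:(lia)).
  assert (Q3 : Kraw n (S k) 0 = C n (S k) * uu n (S k) 0) by exact (Kraw_uu n (S k) 0 ltac:(lia) ltac:(lia)).
  assert (Q4 : Kraw n (S k) 1 = C n (S k) * uu n (S k) 1) by exact (Kraw_uu n (S k) 1 ltac:(lia) ltac:(lia)).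
  rewrite Q1, Q2, Q3, Q4.
  destruct (UF n k ltac:(lia) ltac:(lia)) as [U0 [U1 _]].
  destruct (UF n (S k) ltac:(lia) ltac:(lia)) as [V0 [V1 _]].
  rewrite U0, U1, V0, V1. rewrite S_INR.
  unfold Aq, Bq, Dq, tq, eq_ in *. unfold k in *.
  field. repeat split; try lra.
  intro Hz. apply HD.
  replace (2 * (INR (kk beta n) / INR n) - 1 +
     1 / INR n * (2 * (INR (kk beta n) / INR n) + 2 * (1 / INR n) - 1))
    with (((2 * INR (kk beta n) - INR n) * INR n + (2 * INR (kk beta n) + 2 - INR n)) / (INR n * INR n))
    by (field; lra).
  rewrite Hz. unfold Rdiv. ring.
Qed.

From Stdlib Require Import Reals Lra Lia Arith Factorial ZArith.
From Coquelicot Require Import Rcomplements Rbar Hierarchy Lim_seq.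
Open Scope R_scope.

Lemma lim_eq (f : nat -> R) (l1 l2 : R) : is_lim_seq f l1 -> l1 = l2 -> is_lim_seq f l2.
Proof. intros H ->. exact H. Qed.

Lemma lim_opp' (u : nat -> R) (l : R) : is_lim_seq u l -> is_lim_seq (fun n => - u n) (- l).
Proof. intros H. apply (proj1 (is_lim_seq_opp u l)) in H. exact H. Qed.

Ltac limt := repeat match goal with
 | |- is_lim_seq (fun n => - _) _ => eapply lim_opp'
 | |- is_lim_seq (fun _ => ?c) _ => apply is_lim_seq_const
 | |- is_lim_seq (fun n => _ + _) _ => eapply is_lim_seq_plus'
 | |- is_lim_seq (fun n => _ - _) _ => eapply is_lim_seq_minus'
 | |- is_lim_seq (fun n => _ * _) _ => eapply is_lim_seq_mult'
 | |- is_lim_seq (fun n => _ / _) _ => eapply is_lim_seq_div'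
 | |- is_lim_seq (fun n => _ ^ _) _ => apply lim_pow
 | |- is_lim_seq _ _ => eassumption
end.


Lemma lim_t (beta : R) : 0 < beta -> is_lim_seq (tq beta) beta.
Proof.
  intros Hb.
  apply is_lim_seq_le_le_loc with (u := fun n => beta - 2 * (1 / INR n)) (w := fun n => beta).
  - exists 1%nat. intros n Hn. assert (HN : 0 < INR n) by (apply lt_0_INR; lia).
    destruct (kk_bounds beta n Hb) as [H1 H2]. unfold tq.
    assert (Hi : 0 <= / INR n) by (left; apply Rinv_0_lt_compat; lra). split.
    + replace (beta - 2 * (1 / INR n)) with ((beta * INR n - 2) / INR n) by (field; lra).
      unfold Rdiv. apply Rmult_le_compat_r; lra.
    + replace beta with (beta * INR n / INR n) at 2 by (field; lra).
      unfold Rdiv. apply Rmult_le_compat_r; lra.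
  - eapply lim_eq. apply is_lim_seq_minus'. apply is_lim_seq_const.
    apply is_lim_seq_mult'. apply is_lim_seq_const. apply lim_inv_n. simpl. ring.
  - apply is_lim_seq_const.
Qed.

Lemma neg_div_gt (X Y : R) : 0 < Y -> X < Y -> -1 < - X / Y.
Proof.
  intros HY HX. apply Rmult_lt_reg_r with Y; [exact HY|].
  replace (- X / Y * Y) with (- X) by (field; lra). lra.
Qed.

Lemma part1 (a beta : R) : 0 < a -> 1/2 < beta < 1 ->
  (exists N : nat, forall n : nat, (n >= N)%nat -> LP_feasible n (xstar beta n)) /\
  Un_cv (fun n => LP_objective n a (xstar beta n)) (limit_value a beta).
Proof.
  intros Ha Hb.
  set (rho := 2 * beta - 1).
  assert (Hrho : 0 < rho < 1) by (unfold rho; lra).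
  assert (Lt := lim_t beta ltac:(lra)).
  assert (Le : is_lim_seq eq_ 0) by exact lim_inv_n.
  assert (LD : is_lim_seq (Dq beta) rho) by (eapply lim_eq; [unfold Dq; limt|unfold rho; ring]).
  assert (Hb0 : 0 < beta) by lra.
  assert (Hbeta : beta = (1 + rho) / 2) by (unfold rho; field).
  set (Ainf := (1 + rho * rho) / (2 * rho * (1 + rho))).
  set (Binf := (1 - rho) / (2 * rho)).
  assert (LA : is_lim_seq (Aq beta) Ainf).
  { eapply lim_eq. unfold Aq. limt.
    - apply Rgt_not_eq. apply Rmult_lt_0_compat; [|lra]. apply Rmult_lt_0_compat; lra.
    - unfold Ainf. rewrite Hbeta. field. lra. }
  assert (LB : is_lim_seq (Bq beta) Binf).
  { eapply lim_eq. unfold Bq. limt.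
    - lra.
    - unfold Binf. rewrite Hbeta. field. lra. }
  set (rt := fun n => 2 * INR (kk beta n) / INR n - 1).
  set (rs := fun n => 2 * INR (S (kk beta n)) / INR n - 1).
  assert (Lrt : is_lim_seq rt rho).
  { apply is_lim_seq_ext with (u := fun n => 2 * tq beta n - 1).
    - intros n. unfold rt, tq. unfold Rdiv. ring.
    - eapply lim_eq; [limt|unfold rho; ring]. }
  assert (Lrs : is_lim_seq rs rho).
  { apply is_lim_seq_ext with (u := fun n => 2 * tq beta n + 2 * eq_ n - 1).
    - intros n. unfold rs, tq, eq_. rewrite S_INR. unfold Rdiv. ring.
    - eapply lim_eq; [limt|unfold rho; ring]. }
  destruct (params rho Hrho) as [L [x1 [sg [HL [Hq3 [Hx1 [Hsg [Hc [Hx2 Hgam]]]]]]]]].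
  set (d := rho * rho * (1 - rho) / 2).
  assert (Hd : 0 < d) by (unfold d; apply Rmult_lt_0_compat; [|lra]; apply Rmult_lt_0_compat; nra).
  assert (Hd1 : d <= 1) by (unfold d; nra).
  assert (Ct := ev_conds rho L x1 sg d rt Hrho HL Hq3 Hx1 Hsg Hc Hx2 Hgam Hd Lrt).
  assert (Cs := ev_conds rho L x1 sg d rs Hrho HL Hq3 Hx1 Hsg Hc Hx2 Hgam Hd Lrs).
  set (G := fun n => (1 - 2 * tq beta n) * Aq beta n + (1 - 2 * (tq beta n + eq_ n)) * Bq beta n
            - (Aq beta n + Bq beta n) * (rs n ^ 3 + d)).
  assert (LG : is_lim_seq G ((1 - 2 * beta) * Ainf + (1 - 2 * (beta + 0)) * Binf - (Ainf + Binf) * (rho ^ 3 + d))).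
  { unfold G. limt. }
  assert (EG : eventually (fun n => -1 < G n)).
  { apply (ev_gt G _ (-1) LG).
    replace ((1 - 2 * beta) * Ainf + (1 - 2 * (beta + 0)) * Binf - (Ainf + Binf) * (rho ^ 3 + d))
      with (- (rho + rho ^ 3 + d) / (rho * (1 + rho))) by (rewrite Hbeta; unfold Ainf, Binf; field; lra).
    apply neg_div_gt; [nra|]. unfold d. simpl. assert (0 < rho * rho * (1 - rho)) by (apply Rmult_lt_0_compat; nra). lra. }
  set (H2 := fun n => ((1 - 2 * tq beta n) - ((1 - 2 * tq beta n) ^ 2 - eq_ n) / (1 - eq_ n)) * Aq beta n
     + ((1 - 2 * (tq beta n + eq_ n)) + ((1 - 2 * (tq beta n + eq_ n)) ^ 2 - eq_ n) / (1 - eq_ n)) * Bq beta n).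
  assert (LH2 : is_lim_seq H2 (((1 - 2 * beta) - ((1 - 2 * beta) ^ 2 - 0) / (1 - 0)) * Ainf
     + ((1 - 2 * (beta + 0)) + ((1 - 2 * (beta + 0)) ^ 2 - 0) / (1 - 0)) * Binf)).
  { unfold H2. limt. lra. lra. }
  assert (EH2 : eventually (fun n => -1 < H2 n)).
  { apply (ev_gt H2 _ (-1) LH2).
    replace (((1 - 2 * beta) - ((1 - 2 * beta) ^ 2 - 0) / (1 - 0)) * Ainf
     + ((1 - 2 * (beta + 0)) + ((1 - 2 * (beta + 0)) ^ 2 - 0) / (1 - 0)) * Binf)
      with (- (1 + rho ^ 3) / (1 + rho)) by (rewrite Hbeta; unfold Ainf, Binf; field; lra).
    apply neg_div_gt; [lra|]. simpl. nra. }
  set (H1 := fun n => 2 * (1 - 2 * (tq beta n + eq_ n)) * Bq beta n).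
  assert (LH1 : is_lim_seq H1 (2 * (1 - 2 * (beta + 0)) * Binf)) by (unfold H1; limt).
  assert (EH1 : eventually (fun n => -1 < H1 n)).
  { apply (ev_gt H1 _ (-1) LH1).
    replace (2 * (1 - 2 * (beta + 0)) * Binf) with (- (1 - rho)) by (rewrite Hbeta; unfold Binf; field; lra).
    lra. }
  assert (Et1 := ev_gt _ _ (1/2) Lt ltac:(lra)).
  assert (Lt2 : is_lim_seq (fun n => tq beta n + 2 * eq_ n) beta) by (eapply lim_eq; [limt|ring]).
  assert (Et2 := ev_lt _ _ 1 Lt2 ltac:(lra)).
  assert (ED := ev_gt _ _ 0 LD ltac:(lra)).
  assert (EA := ev_gt _ _ 0 LA ltac:(unfold Ainf; apply Rdiv_lt_0_compat; nra)).
  assert (EB := ev_gt _ _ 0 LB ltac:(unfold Binf; apply Rdiv_lt_0_compat; lra)).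
  assert (E6 := ev_nat 6).
  assert (Ebasic : eventually (fun n => (6 <= n)%nat /\ (1 <= kk beta n)%nat /\ (kk beta n + 2 <= n)%nat
      /\ 0 < Dq beta n)).
  { assert (EE := ev_and _ _ Et1 (ev_and _ _ Et2 (ev_and _ _ ED E6))).
    revert EE. apply ev_imp. intros n [F1 [F2 [F3 F4]]].
    assert (HN : 0 < INR n) by (apply lt_0_INR; lia).
    unfold tq, eq_ in *.
    assert (HK : INR n / 2 < INR (kk beta n)).
    { apply Rmult_lt_compat_r with (r := INR n) in F1; [|lra].
      replace (INR (kk beta n) / INR n * INR n) with (INR (kk beta n)) in F1 by (field; lra). lra. }
    assert (HK2 : INR (kk beta n) + 2 < INR n).
    { apply Rmult_lt_compat_r with (r := INR n) in F2; [|lra].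
      replace ((INR (kk beta n) / INR n + 2 * (1 / INR n)) * INR n) with (INR (kk beta n) + 2) in F2
        by (field; lra). lra. }
    assert (H6 : 6 <= INR n) by (replace 6 with (INR 6) by (simpl; ring); apply le_INR; lia).
    split; [lia|]. split.
    - assert (0 < kk beta n)%nat by (apply INR_lt; simpl; lra). lia.
    - split; [|exact F3]. apply INR_le. rewrite plus_INR. simpl (INR 2). lra. }
  split.
  - assert (EE := ev_and _ _ Ebasic (ev_and _ _ Ct (ev_and _ _ Cs (ev_and _ _ EG (ev_and _ _ EH2
        (ev_and _ _ EH1 (ev_and _ _ EA EB))))))).
    destruct EE as [N HN]. exists N. intros n Hn.
    destruct (HN n Hn) as [[F6 [Fk1 [Fk2 FD]]] [[Ct1 [Ct2 [Ct3 [Ct4 [Ct5 Ct6]]]]]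
       [[Cs1 [Cs2 [Cs3 [Cs4 [Cs5 Cs6]]]]] [FG [FH2 [FH1 [FA FB]]]]]]].
    assert (HN0 : 0 < INR n) by (apply lt_0_INR; lia).
    assert (Ers : rs n = rt n + 2 / INR n) by (unfold rs, rt; rewrite S_INR; field; lra).
    assert (Hrt0 : 0 < rt n) by lra.
    assert (Hrtrs : rt n <= rs n) by (rewrite Ers; assert (0 < 2 / INR n) by (apply Rdiv_lt_0_compat; lra); lra).
    assert (Hd01 : 0 <= d <= 1) by lra.
    apply (feasible_of beta n (rs n ^ 3 + d)).
    + exact F6.
    + exact Fk1.
    + exact Fk2.
    + exact FD.
    + left. exact FA.
    + left. exact FB.
    + intros i Hi3 Hi2.
      assert (Bt := uu_bound n (kk beta n) sg d _ _ ltac:(lia) ltac:(lia) (proj1 Hsg) Ct1 Hd01 Ct2 Ct3 Ct4 Ct5 Ct6 i Hi3 Hi2).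
      assert (Bs := uu_bound n (S (kk beta n)) sg d _ _ ltac:(lia) ltac:(lia) (proj1 Hsg) Cs1 Hd01 Cs2 Cs3 Cs4 Cs5 Cs6 i Hi3 Hi2).
      fold (rt n) in Bt. fold (rs n) in Bs.
      assert (P3 : rt n ^ 3 <= rs n ^ 3) by (apply pow_incr; lra).
      assert (P4 : 0 <= rt n ^ 3) by (apply pow_le; lra).
      assert (Mx1 : Rmax (rt n ^ 3) d <= rs n ^ 3 + d) by (apply Rmax_lub; lra).
      assert (Mx2 : Rmax (rs n ^ 3) d <= rs n ^ 3 + d) by (apply Rmax_lub; lra).
      split; lra.
    + left. exact FG.
    + rewrite (uu2 n (kk beta n)) by lia. rewrite (uu2 n (S (kk beta n))) by lia.
      replace (1 - 2 * INR (kk beta n) / INR n) with (1 - 2 * tq beta n) by (unfold tq; field; lra).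
      replace (1 - 2 * INR (S (kk beta n)) / INR n) with (1 - 2 * (tq beta n + eq_ n))
        by (unfold tq, eq_; rewrite S_INR; field; lra).
      left. exact FH2.
    + left. exact FH1.
  - apply is_lim_seq_Reals.
    apply is_lim_seq_ext_loc with (u := fun n => - ((1 + (1 - 2 * tq beta n) * (1 / a - 1)) * Aq beta n
      + (1 + (1 - 2 * (tq beta n + eq_ n)) * (1 / a - 1)) * Bq beta n)).
    + revert Ebasic. apply ev_imp. intros n [F6 [Fk1 [Fk2 FD]]].
      rewrite obj_eq; [reflexivity|exact Ha|exact Fk1|lia|lra].
    + eapply lim_eq; [limt|].
      unfold limit_value. rewrite Hbeta. unfold Ainf, Binf. field. split; lra.
Qed.

From Stdlib Require Import Reals Lra Lia Classical.
Open Scope R_scope.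

Lemma lv_y (a beta : R) : 0 < a -> 1/2 < beta ->
  limit_value a beta = ((2 * beta - 1) * (1 / a - 1) - 1) / ((2 * beta - 1) * (2 * beta)).
Proof. intros Ha Hb. unfold limit_value. field. split; lra. Qed.

Lemma part4 (a : R) : 0 < a -> a < 1/4 ->
  1/2 < 1 / (2 * (1 - sqrt a)) < 1 /\ limit_value a (1 / (2 * (1 - sqrt a))) = theta a.
Proof.
  intros Ha Ha4.
  set (s := sqrt a).
  assert (Hs2 : s * s = a) by (unfold s; apply sqrt_sqrt; lra).
  assert (Hs0 : 0 < s) by (unfold s; apply sqrt_lt_R0; lra).
  assert (Hs1 : s < 1/2) by nra.
  split.
  - split.
    + apply Rmult_lt_reg_r with (2 * (1 - s)); [lra|]. field_simplify; lra.
    + apply Rmult_lt_reg_r with (2 * (1 - s)); [lra|]. field_simplify; lra.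
  - unfold theta. destruct (Rlt_dec a (1/4)) as [_|H]; [|lra]. fold s.
    unfold limit_value. rewrite <- Hs2. field. repeat split; lra.
Qed.

Lemma part3 (a : R) : 0 < a <= 1/2 ->
  is_lub (fun y => exists beta : R, 1/2 < beta < 1 /\ y = limit_value a beta) (theta a).
Proof.
  intros [Ha Ha2].
  destruct (Rlt_dec a (1/4)) as [Hlt|Hge].
  -
    set (s := sqrt a).
    assert (Hs2 : s * s = a) by (unfold s; apply sqrt_sqrt; lra).
    assert (Hs0 : 0 < s) by (unfold s; apply sqrt_lt_R0; lra).
    assert (Hs1 : s < 1/2) by nra.
    assert (Eth : theta a = (1 - s) ^ 2 / a).
    { unfold theta. destruct (Rlt_dec a (1/4)); [reflexivity|lra]. }
    split.
    + intros y [beta [Hb ->]]. rewrite Eth, lv_y by lra.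
      set (y := 2 * beta - 1).
      assert (Hy : 0 < y < 1) by (unfold y; lra).
      rewrite <- Hs2.
      apply Rmult_le_reg_r with (y * (y + 1) * (s * s)).
      { apply Rmult_lt_0_compat; [apply Rmult_lt_0_compat|]; nra. }
      replace ((y * (1 / (s * s) - 1) - 1) / (y * (2 * beta)) * (y * (y + 1) * (s * s)))
        with (y * (1 - s * s) - s * s) by (unfold y; field; split; lra).
      replace ((1 - s) ^ 2 / (s * s) * (y * (y + 1) * (s * s))) with ((1 - s) ^ 2 * (y * (y + 1)))
        by (field; lra).
      assert (0 <= ((1 - s) * y - s) ^ 2) by apply pow2_ge_0.
      nra.
    + intros M HM. destruct (part4 a Ha Hlt) as [Hb Hv].
      apply HM. exists (1 / (2 * (1 - sqrt a))). split; [exact Hb|]. symmetry. exact Hv.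
  - assert (Eth : theta a = 1 / (2 * a) - 1).
    { unfold theta. destruct (Rlt_dec a (1/4)); [lra|reflexivity]. }
    set (c := 1 / a - 1).
    assert (Hc1 : 1 <= c) by (unfold c; apply Rle_trans with (1/(1/2) - 1); [lra|];
      apply Rplus_le_compat_r; apply Rmult_le_compat_l; [lra|apply Rinv_le_contravar; lra]).
    assert (Hc3 : c <= 3) by (unfold c; apply Rle_trans with (1/(1/4) - 1); [|lra];
      apply Rplus_le_compat_r; apply Rmult_le_compat_l; [lra|apply Rinv_le_contravar; lra]).
    assert (Eth' : theta a = (c - 1) / 2) by (rewrite Eth; unfold c; field; lra).
    assert (Key : forall beta, 1/2 < beta < 1 ->
       (c - 1) / 2 - limit_value a beta = (1 - (2 * beta - 1)) * (2 - (c - 1) * (2 * beta - 1))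
           / (2 * (2 * beta - 1) * (2 * beta))).
    { intros beta Hb. rewrite lv_y by lra. fold c. field. split; lra. }
    split.
    + intros y [beta [Hb ->]]. rewrite Eth'.
      assert (K := Key beta Hb).
      assert (0 <= (1 - (2 * beta - 1)) * (2 - (c - 1) * (2 * beta - 1)) / (2 * (2 * beta - 1) * (2 * beta))).
      { apply Rmult_le_pos; [apply Rmult_le_pos; nra|].
        left. apply Rinv_0_lt_compat. apply Rmult_lt_0_compat; [|lra]. lra. }
      lra.
    + intros M HM. rewrite Eth'. apply Rnot_lt_le. intros HMlt.
      set (ep := Rmin (1/2) (((c - 1) / 2 - M) / 4)).
      assert (Hep : 0 < ep) by (unfold ep; apply Rmin_pos; lra).
      assert (Hep1 : ep <= 1/2) by (unfold ep; apply Rmin_l).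
      assert (Hep2 : ep <= ((c - 1) / 2 - M) / 4) by (unfold ep; apply Rmin_r).
      set (beta := 1 - ep / 2).
      assert (Hb : 1/2 < beta < 1) by (unfold beta; lra).
      assert (HMb : limit_value a beta <= M) by (apply HM; exists beta; split; [exact Hb|reflexivity]).
      assert (K := Key beta Hb).
      replace (2 * beta - 1) with (1 - ep) in K by (unfold beta; lra).
      replace (2 * beta) with (2 - ep) in K by (unfold beta; lra).
      assert (Hb2 : (1 - (1 - ep)) * (2 - (c - 1) * (1 - ep)) / (2 * (1 - ep) * (2 - ep)) <= 2 * ep).
      { apply Rmult_le_reg_r with (2 * (1 - ep) * (2 - ep)).
        { apply Rmult_lt_0_compat; [|lra]. lra. }
        replace ((1 - (1 - ep)) * (2 - (c - 1) * (1 - ep)) / (2 * (1 - ep) * (2 - ep)) * (2 * (1 - ep) * (2 - ep)))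
          with (ep * (2 - (c - 1) * (1 - ep))) by (field; split; lra).
        assert (0 <= (c - 1) * (1 - ep)) by (apply Rmult_le_pos; lra).
        assert (3/4 <= (1 - ep) * (2 - ep)) by nra.
        nra. }
      lra.
Qed.

Lemma part2 (a : R) : 0 < a <= 1/2 ->
  forall eps : R, eps > 0 -> exists N : nat, forall n : nat, (n >= N)%nat ->
     forall L : R, is_lub (LP_values n a) L -> theta a - eps <= L.
Proof.
  intros Ha eps Heps.
  destruct (part3 a Ha) as [Hub Hlub].
  assert (Ex : exists beta, 1/2 < beta < 1 /\ theta a - eps / 2 < limit_value a beta).
  { destruct (classic (exists beta, 1/2 < beta < 1 /\ theta a - eps / 2 < limit_value a beta)) as [H|H];
      [exact H|].
    exfalso.
    assert (Hb : is_upper_bound (fun y => exists beta : R, 1/2 < beta < 1 /\ y = limit_value a beta)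
                   (theta a - eps / 2)).
    { intros y [beta [Hb ->]]. apply Rnot_lt_le. intro Hc. apply H. exists beta. split; assumption. }
    assert (X := Hlub _ Hb). lra. }
  destruct Ex as [beta [Hb Hv]].
  destruct (part1 a beta (proj1 Ha) Hb) as [[N1 HN1] Hcv].
  destruct (Hcv (eps / 2) ltac:(lra)) as [N2 HN2].
  exists (max N1 N2). intros n Hn L HL.
  assert (Hf := HN1 n ltac:(lia)).
  assert (Hd := HN2 n ltac:(lia)). unfold R_dist in Hd. apply Rabs_def2 in Hd.
  assert (Hin : LP_values n a (LP_objective n a (xstar beta n))).
  { exists (xstar beta n). split; [exact Hf|reflexivity]. }
  destruct HL as [HL1 _]. assert (X := HL1 _ Hin). lra.
Qed.

Theorem mainTheorem5 (a : R) (ha : 0 < a <= 1/2) :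
  (forall beta : R, 1/2 < beta < 1 ->
     (exists N : nat, forall n : nat, (n >= N)%nat -> LP_feasible n (xstar beta n)) /\
     Un_cv (fun n => LP_objective n a (xstar beta n)) (limit_value a beta)) /\
  (forall eps : R, eps > 0 -> exists N : nat, forall n : nat, (n >= N)%nat ->
     forall L : R, is_lub (LP_values n a) L -> theta a - eps <= L) /\
  is_lub (fun y => exists beta : R, 1/2 < beta < 1 /\ y = limit_value a beta) (theta a) /\
  (a < 1/4 ->
     1/2 < 1 / (2 * (1 - sqrt a)) < 1 /\
     limit_value a (1 / (2 * (1 - sqrt a))) = theta a).
Proof.
  split; [|split; [|split]].
  - intros beta Hb. apply part1; [apply ha|exact Hb].
  - apply part2. exact ha.
  - apply part3. exact ha.
  - intros H. apply part4; [apply ha|exact H].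
Qed.
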